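(* Let $C$ be a kernel configuration. A model $(\mathcal M,\theta)\models T_\theta^C$ is an existentially closed model of $T^C_\theta$ if and only if for every $L(M)$-formula $\psi(\vec x)$ the following holds: if there is $(\mathcal M',\theta')\models T_\theta^C$ with $(\mathcal M,\theta)\subseteq(\mathcal M',\theta')$ and $(\mathcal M',\theta')\models\exists\underline x\in\mathbb V:\psi_\theta(\underline x)$, then $(\mathcal M,\theta)\models\exists\underline x\in\mathbb V:\psi_\theta(\underline x)$.
   Context: Setting: $L$ is a first-order language, $T$ a model-complete $L$-theory and $K$ a field. There are $L$-formulas without parameters which define, in every model $\mathcal M\models T$, a nontrivial $K$-vector space $\mathbb V=\mathbb V^{\mathcal M}$; elements of $\mathbb V$ are treated as single elements. $L_\theta=L\cup\{\theta\}$, $\theta$ a new unary function symbol; $T_\theta$ is $T$ plus axioms saying $\theta|_{\mathbb V}$ is a $K$-linear endomorphism of $\mathbb V$ and $\theta(x)=0$ for $x\notin\mathbb V$. For $\rho=\sum_i(\rho)_iX^i\in K[X]$, $\rho[\theta]:=\sum_i(\rho)_i\theta^i$, $\mathrm{Ker}(\rho)=\{v\in\mathbb V:\rho[\theta](v)=0\}$. $K[X]_{\mathrm{irr}}$ is the set of monic irreducible polynomials. A kernel configuration is a pair $C=(c,d)$ with $c:K[X]_{\mathrm{irr}}\to\mathbb N\cup\{\infty\}$, $d\in\mathbb N_{>0}\cup\{\infty\}$ such that $d=\infty$ or $d=\sum_f\deg(f)c(f)$; write $C(f)=c(f)$. $C$ is algebraic if $d<\infty$, with $\mathrm{MiPo}(C)=\prod_ff^{C(f)}$,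 and transcendental otherwise. $\theta$ is a $C$-endomorphism if $\mathrm{Ker}(\mathrm{MiPo}(C))=\mathbb V$ (algebraic case), resp. $\mathrm{Ker}(f^{C(f)})=\mathrm{Ker}(f^{C(f)+1})$ for all $f$ with $C(f)<\infty$ (transcendental case). $T^C_\theta:=T_\theta\cup\{\theta|_{\mathbb V}\text{ is a }C\text{-endomorphism}\}$. Existentially closed model of $T'$: for every extension $(\mathcal M',\theta')\supseteq(\mathcal M,\theta)$ with $(\mathcal M',\theta')\models T'$, every existential sentence with parameters in $\mathcal M$ true in the extension is true in $(\mathcal M,\theta)$. Placeholder notation: for $\underline x=(x_1,\dots,x_n)$, $\vec x=(x^i_k:1\le k\le n,i\in\omega)$ are new variables (finitely many occur in any formula) and $\psi_\theta(\underline x)$ is $\psi(\vec x)$ with each $x^i_k$ replaced by $\theta^i(x_k)$. *)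

(* Defs.v *)
From HB Require Import structures.
From mathcomp Require Import all_boot all_order all_algebra.
From Stdlib Require Import ClassicalEpsilon Cantor.

Set Implicit Arguments.
Unset Strict Implicit.
Unset Printing Implicit Defensive.
Import GRing.Theory.
Local Open Scope ring_scope.

Record lang := Lang {
  fsym : Type;
  rsym : Type;
  far : fsym -> nat;
  rar : rsym -> nat }.

Section Syntax.
Variable L : lang.

Inductive fo_term : Type :=
  | tvar : nat -> fo_term
  | tapp : forall f : fsym L, ('I_(far f) -> fo_term) -> fo_term.

Inductive fo_form : Type :=
  | fFalse : fo_form
  | fTrue : fo_form
  | fEq : fo_term -> fo_term -> fo_form
  | fRel : forall r : rsym L, ('I_(rar r) -> fo_term) -> fo_form
  | fNot : fo_form -> fo_form
  | fAnd : fo_form -> fo_form -> fo_form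
  | fOr : fo_form -> fo_form -> fo_form
  | fImp : fo_form -> fo_form -> fo_form
  | fEx : nat -> fo_form -> fo_form
  | fAll : nat -> fo_form -> fo_form.

Fixpoint qf (phi : fo_form) : Prop :=
  match phi with
  | fFalse | fTrue | fEq _ _ | fRel _ _ => True
  | fNot p => qf p
  | fAnd p q | fOr p q | fImp p q => qf p /\ qf q
  | fEx _ _ | fAll _ _ => False
  end.

Inductive existential : fo_form -> Prop :=
  | ex_qf : forall phi, qf phi -> existential phi
  | ex_ex : forall n phi, existential phi -> existential (fEx n phi).

Fixpoint tfree (v : nat) (t : fo_term) : Prop :=
  match t with
  | tvar m => m = v
  | tapp f a => exists i, tfree v (a i)
  end.

Fixpoint ffree (v : nat) (phi : fo_form) : Prop :=
  match phi with
  | fFalse | fTrue => False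
  | fEq t1 t2 => tfree v t1 \/ tfree v t2
  | fRel r a => exists i, tfree v (a i)
  | fNot p => ffree v p
  | fAnd p q | fOr p q | fImp p q => ffree v p \/ ffree v q
  | fEx m p | fAll m p => m <> v /\ ffree v p
  end.
End Syntax.

Arguments tvar {L}.
Arguments fFalse {L}.
Arguments fTrue {L}.

Record struc (L : lang) := Struc {
  dom :> Type;
  dom_inh : inhabited dom;
  fint : forall f : fsym L, ('I_(far f) -> dom) -> dom;
  rint : forall r : rsym L, ('I_(rar r) -> dom) -> Prop }.

Definition upd {A : Type} (e : nat -> A) (n : nat) (a : A) : nat -> A :=
  fun m => if m == n then a else e m.

Section Semantics.
Variables (L : lang) (M : struc L).

Fixpoint teval (e : nat -> M) (t : fo_term L) : M :=
  match t with
  | tvar n => e n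
  | tapp f a => @fint L M f (fun i => teval e (a i))
  end.

Fixpoint sat (e : nat -> M) (phi : fo_form L) : Prop :=
  match phi with
  | fFalse => False
  | fTrue => True
  | fEq t1 t2 => teval e t1 = teval e t2
  | fRel r a => @rint L M r (fun i => teval e (a i))
  | fNot p => ~ sat e p
  | fAnd p q => sat e p /\ sat e q
  | fOr p q => sat e p \/ sat e q
  | fImp p q => sat e p -> sat e q
  | fEx n p => exists a : M, sat (upd e n a) p
  | fAll n p => forall a : M, sat (upd e n a) p
  end.
End Semantics.

(* embeddings of structures (an extension N of M is given by an embedding) *)
Definition embedding (L : lang) (M N : struc L) (h : M -> N) : Prop :=
  injective h /\
  (forall (f : fsym L) (a : 'I_(far f) -> M), h (@fint L M f a) = @fint L N f (h \o a)) /\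
  (forall (r : rsym L) (a : 'I_(rar r) -> M), @rint L M r a <-> @rint L N r (h \o a)).

(* theories are sets of formulas; a model satisfies the universal closure of
   each member *)
Definition theory (L : lang) := fo_form L -> Prop.

Definition is_model (L : lang) (T : theory L) (M : struc L) : Prop :=
  forall phi, T phi -> forall e : nat -> M, sat e phi.

Definition model_complete (L : lang) (T : theory L) : Prop :=
  forall (M N : struc L) (h : M -> N), is_model T M -> is_model T N ->
    embedding h -> forall (phi : fo_form L) (e : nat -> M), sat e phi <-> sat (h \o e) phi.

(* L_theta = L + a new unary function symbol theta; L(A) = L + constants *)

Definition lang_theta (L : lang) : lang :=
  Lang (fun f : option (fsym L) => match f with None => 1%N | Some g => far g end)
       (@rar L).

Definition expand_theta (L : lang) (M : struc L) (th : M -> M) : struc (lang_theta L) :=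
  @Struc (lang_theta L) M (dom_inh M)
    (fun f => match f as o return ('I_(@far (lang_theta L) o) -> M) -> M with
              | None => fun a => th (a ord0)
              | Some g => fun a => @fint L M g a
              end)
    (@rint L M).

Definition lang_consts (L : lang) (A : Type) : lang :=
  Lang (fun f : fsym L + A => match f with inl g => far g | inr _ => 0%N end)
       (@rar L).

Definition expand_consts (L : lang) (A : Type) (N : struc L) (c : A -> N) :
  struc (lang_consts L A) :=
  @Struc (lang_consts L A) N (dom_inh N)
    (fun f => match f as o return ('I_(@far (lang_consts L A) o) -> N) -> N with
              | inl g => fun a => @fint L N g a
              | inr x => fun _ => c x
              end)
    (@rint L N).

(* V(x0); zero(x0); add(x0,x1,x2) ("x0 + x1 = x2"); scal_a(x0,x1) ("a x0 = x1") *)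
Record vsdef (L : lang) (K : fieldType) := VSDef {
  vs_set : fo_form L;
  vs_zero : fo_form L;
  vs_add : fo_form L;
  vs_scal : K -> fo_form L }.

Definition env1 {A : Type} (x : A) : nat -> A := fun _ => x.
Definition env2 {A : Type} (x y : A) : nat -> A :=
  fun n => match n with 0%N => x | _ => y end.
Definition env3 {A : Type} (x y z : A) : nat -> A :=
  fun n => match n with 0%N => x | 1%N => y | _ => z end.

Section VS.
Variables (L : lang) (K : fieldType) (D : vsdef L K) (M : struc L).

Definition inV (x : M) : Prop := sat (env1 x) (vs_set D).
Definition vzero : M := epsilon (dom_inh M) (fun z => sat (env1 z) (vs_zero D)).
Definition vadd (x y : M) : M :=
  epsilon (dom_inh M) (fun z => sat (env3 x y z) (vs_add D)).
Definition vscal (a : K) (x : M) : M :=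
  epsilon (dom_inh M) (fun z => sat (env2 x z) (vs_scal D a)).

Definition defines_nontrivial_vs : Prop :=
  (exists! z : M, sat (env1 z) (vs_zero D)) /\ inV vzero /\
  (forall x y, inV x -> inV y -> exists! z : M, sat (env3 x y z) (vs_add D)) /\
  (forall a x, inV x -> exists! z : M, sat (env2 x z) (vs_scal D a)) /\
  (forall x y, inV x -> inV y -> inV (vadd x y)) /\
  (forall a x, inV x -> inV (vscal a x)) /\
  (forall x y z, inV x -> inV y -> inV z -> vadd x (vadd y z) = vadd (vadd x y) z) /\
  (forall x y, inV x -> inV y -> vadd x y = vadd y x) /\
  (forall x, inV x -> vadd vzero x = x) /\
  (forall x, inV x -> exists y, inV y /\ vadd x y = vzero) /\
  (forall a x y, inV x -> inV y -> vscal a (vadd x y) = vadd (vscal a x) (vscal a y)) /\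
  (forall a b x, inV x -> vscal (a + b) x = vadd (vscal a x) (vscal b x)) /\
  (forall a b x, inV x -> vscal (a * b) x = vscal a (vscal b x)) /\
  (forall x, inV x -> vscal 1 x = x) /\
  (exists v, inV v /\ v <> vzero).

Variable th : M -> M.

Definition peval (rho : {poly K}) (v : M) : M :=
  foldr (fun i acc => vadd (vscal rho`_i (iter i th v)) acc) vzero
        (iota 0 (size rho)).

Definition inKer (rho : {poly K}) (v : M) : Prop := inV v /\ peval rho v = vzero.

Definition theta_axioms : Prop :=
  (forall x, inV x -> inV (th x)) /\
  (forall x y, inV x -> inV y -> th (vadd x y) = vadd (th x) (th y)) /\
  (forall a x, inV x -> th (vscal a x) = vscal a (th x)) /\
  (forall x, ~ inV x -> th x = vzero).
End VS.

Definition monic_irr (K : fieldType) (f : {poly K}) : Prop :=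
  f \is monic /\ irreducible_poly f.

(* C = (c, d); None stands for infinity.  c is only relevant on K[X]_irr. *)
Record kconf (K : fieldType) := KConf {
  kc : {poly K} -> option nat;
  kd : option nat }.

Definition kc_support (K : fieldType) (C : kconf K) (s : seq {poly K}) : Prop :=
  uniq s /\ (forall f, f \in s -> monic_irr f /\ kc C f <> None) /\
  (forall f, monic_irr f -> f \notin s -> kc C f = Some 0%N).

Definition kernel_configuration (K : fieldType) (C : kconf K) : Prop :=
  match kd C with
  | None => True
  | Some d => (0 < d)%N /\
      exists s, kc_support C s /\
        d = (\sum_(f <- s) (size f).-1 * odflt 0%N (kc C f))%N
  end.

Definition MiPo (K : fieldType) (C : kconf K) (s : seq {poly K}) : {poly K} :=
  \prod_(f <- s) f ^+ odflt 0%N (kc C f).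

Definition C_endomorphism (L : lang) (K : fieldType) (D : vsdef L K) (C : kconf K)
  (M : struc L) (th : M -> M) : Prop :=
  match kd C with
  | Some _ => exists s, kc_support C s /\
      (forall v, inV D v -> inKer D th (MiPo C s) v)
  | None => forall f k, monic_irr f -> kc C f = Some k ->
      forall v, inKer D th (f ^+ k) v <-> inKer D th (f ^+ k.+1) v
  end.

Definition model_TthC (L : lang) (K : fieldType) (T : theory L) (D : vsdef L K)
  (C : kconf K) (M : struc L) (th : M -> M) : Prop :=
  is_model T M /\ theta_axioms D th /\ C_endomorphism D C th.

(* existentially closed model of T_theta^C; existential L_theta-sentences with
   parameters in M = existential L_theta-formulas with their free variables
   assigned elements of M *)
Definition ec_model_TthC (L : lang) (K : fieldType) (T : theory L) (D : vsdef L K)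
  (C : kconf K) (M : struc L) (th : M -> M) : Prop :=
  model_TthC T D C th /\
  forall (N : struc L) (th' : N -> N) (h : M -> N),
    model_TthC T D C th' ->
    embedding (M := expand_theta th) (N := expand_theta th') h ->
    forall (phi : fo_form (lang_theta L)) (e : nat -> M), existential phi ->
      sat (M := expand_theta th') (h \o e) phi -> sat (M := expand_theta th) e phi.

(* Placeholder variables: x^i_k is the variable Cantor.to_nat (k, i)    *)
(* (k counted from 0); psi_theta(x) is evaluated by assigning            *)
(* theta^i(x_k) to x^i_k.                                               *)

Definition pvar (k i : nat) : nat := Cantor.to_nat (k, i).

Definition penv (A : Type) (th : A -> A) (x : nat -> A) : nat -> A :=
  fun v => let: (k, i) := Cantor.of_nat v in iter i th (x k).

Definition placeholder_formula (L : lang) (n : nat) (psi : fo_form L) : Prop :=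
  forall v, ffree v psi -> ((Cantor.of_nat v).1 < n)%N.

(* (N, th') |= exists x in V^n : psi_theta(x), psi an L(A)-formula whose
   constants a : A are interpreted as c a *)
Definition sat_exV_theta (L : lang) (K : fieldType) (D : vsdef L K) (A : Type)
  (N : struc L) (th' : N -> N) (c : A -> N) (n : nat) (psi : fo_form (lang_consts L A))
  : Prop :=
  exists x : nat -> N, (forall k, (k < n)%N -> inV D (x k)) /\
    sat (M := expand_consts c) (penv th' x) psi.

(* Main.v *)
Require Import Defs.
From mathcomp Require Import all_boot all_order all_algebra.
From HB Require Import structures.
From mathcomp Require Import zify.
From mathcomp Require classical_sets filter.
From Stdlib Require Import Classical ClassicalEpsilon FunctionalExtensionality PropExtensionality ProofIrrelevance Cantor.
Set Implicit Arguments.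
Unset Strict Implicit.
Unset Printing Implicit Defensive.

Definition isUltra (I : Type) (U : (I -> Prop) -> Prop) : Prop :=
  U (fun _ => True) /\ ~ U (fun _ => False) /\
  (forall A B : I -> Prop, (forall j, A j -> B j) -> U A -> U B) /\
  (forall A B : I -> Prop, U A -> U B -> U (fun j => A j /\ B j)) /\
  (forall A : I -> Prop, U A \/ U (fun j => ~ A j)).

Lemma ultra_ex (I : Type) (S : (I -> Prop) -> Prop) :
  (exists A, S A) -> (forall A, S A -> exists j, A j) ->
  (forall A B, S A -> S B -> exists C, S C /\ forall j, C j -> A j /\ B j) ->
  exists U, isUltra U /\ forall A, S A -> U A.
Proof.
move=> [A0 SA0] Sne SI.
pose F := fun X : I -> Prop => exists C, S C /\ forall j, C j -> X j.
have FF : filter.ProperFilter F.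
  split.
  - move=> [C [SC CX]]; have [j Cj] := Sne _ SC; exact: (CX j Cj).
  - split.
    + by exists A0; split.
    + move=> X Y [C [SC CX]] [D [SD DY]].
      have [E [SE EP]] := SI _ _ SC SD.
      exists E; split => // j /EP [/CX ? /DY ?]; by split.
    + move=> X Y XY [C [SC CX]]; exists C; split => // j /CX; exact: XY.
have [G [GU FG]] := filter.ultraFilterLemma FF.
exists G; split; last first.
  move=> A SA; apply: FG; exists A; split => //.
have GF : filter.ProperFilter G by case: GU.
split; first exact: (@filter.filterT _ _ (@filter.filter_filter _ _ GF)).
split; first exact: (@filter.filter_not_empty _ G GF).
split; first by move=> A B AB GA; apply: (@filter.filterS _ _ (@filter.filter_filter _ _ GF) A B) => // j; exact: AB.
split; first by move=> A B GA GB; exact: (@filter.filterI _ _ (@filter.filter_filter _ _ GF) A B GA GB).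
move=> A; exact: (filter.in_ultra_setVsetC A GU).
Qed.

Section Ultraproduct.
Variables (L : lang) (S : struc L) (I : Type) (U : (I -> Prop) -> Prop).
Hypothesis HU : isUltra U.

Lemma U_T : U (fun _ => True). Proof. by case: HU. Qed.
Lemma U_F : ~ U (fun _ => False). Proof. by case: HU => _ []. Qed.
Lemma U_S (A B : I -> Prop) : (forall j, A j -> B j) -> U A -> U B.
Proof. by case: HU => _ [] _ [] H _; exact: H. Qed.
Lemma U_I (A B : I -> Prop) : U A -> U B -> U (fun j => A j /\ B j).
Proof. by case: HU => _ [] _ [] _ [] H _; exact: H. Qed.
Lemma U_C (A : I -> Prop) : U A \/ U (fun j => ~ A j).
Proof. by case: HU => _ [] _ [] _ [] _ H; exact: H. Qed.
Lemma U_all (A : I -> Prop) : (forall j, A j) -> U A.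
Proof. move=> H; apply: U_S U_T => j _; exact: H. Qed.
Lemma U_ex (A : I -> Prop) : U A -> exists j, A j.
Proof.
move=> UA; apply: NNPP => H; apply: U_F; apply: U_S UA => j Aj; apply: H; by exists j.
Qed.
Lemma U_neg (A : I -> Prop) : ~ U A <-> U (fun j => ~ A j).
Proof.
split; first by case: (U_C A).
move=> UN UA; apply: U_F; apply: U_S (U_I UA UN) => j [] //.
Qed.

Lemma U_fin k (A : 'I_k -> I -> Prop) : (forall i, U (A i)) -> U (fun j => forall i, A i j).
Proof.
elim: k A => [|k IH] A HA.
  by apply: U_all => j [].
have H1 := IH (fun i => A (widen_ord (leqnSn k) i)) (fun i => HA _).
have H2 := HA ord_max.
apply: U_S (U_I H1 H2) => j [Hw Hm] i.
case: (ltnP i k) => Hi.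
  have -> : i = widen_ord (leqnSn k) (Ordinal Hi) by apply: val_inj.
  exact: Hw.
have -> : i = ord_max by apply: val_inj => /=; apply/eqP; rewrite eqn_leq Hi -ltnS ltn_ord.
exact: Hm.
Qed.

Definition ueq (f g : I -> S) : Prop := U (fun j => f j = g j).
Definition Q := {P : (I -> S) -> Prop | exists f, P = ueq f}.
Definition cls (f : I -> S) : Q := exist _ (ueq f) (ex_intro _ f erefl).

Lemma cls_eq f g : cls f = cls g <-> U (fun j => f j = g j).
Proof.
split.
  move=> E; have : proj1_sig (cls f) g by rewrite E /=; apply: U_all.
  by rewrite /= /ueq; apply: U_S => j ->.
move=> Hfg; rewrite /cls.
have E : ueq f = ueq g.
  apply: functional_extensionality => h; apply: propositional_extensionality.
  split => H.
    by apply: U_S (U_I Hfg H) => j [<- ->].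
  by apply: U_S (U_I Hfg H) => j [-> ->].
move: (ex_intro _ f _) (ex_intro _ g _).
rewrite E => p1 p2; by rewrite (proof_irrelevance _ p1 p2).
Qed.

Definition rep (a : Q) : I -> S :=
  proj1_sig (constructive_indefinite_description _ (proj2_sig a)).

Lemma cls_rep a : cls (rep a) = a.
Proof.
rewrite /rep; case: (constructive_indefinite_description _ _) => f /= Hf.
case: a Hf => P HP /= Hf; subst P.
by rewrite /cls; move: (ex_intro _ f _) HP => p1 p2; rewrite (proof_irrelevance _ p1 p2).
Qed.

Lemma rep_cls f : U (fun j => rep (cls f) j = f j).
Proof. by apply/cls_eq; rewrite cls_rep. Qed.

Lemma Q_inh : inhabited Q.
Proof. case: (dom_inh S) => s0; exact: inhabits (cls (fun _ => s0)). Qed.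

Definition uP : struc L :=
  @Struc L Q Q_inh (fun f a => cls (fun j => @fint L S f (fun i => rep (a i) j)))
         (fun r a => U (fun j => @rint L S r (fun i => rep (a i) j))).

Lemma cls_fint f (F : 'I_(far f) -> I -> S) :
  @fint L uP f (fun i => cls (F i)) = cls (fun j => @fint L S f (fun i => F i j)).
Proof.
apply/cls_eq; apply: U_S (U_fin (fun i => rep_cls (F i))) => j H.
by congr fint; apply: functional_extensionality => i; rewrite H.
Qed.

Lemma cls_rint r (F : 'I_(rar r) -> I -> S) :
  @rint L uP r (fun i => cls (F i)) <-> U (fun j => @rint L S r (fun i => F i j)).
Proof.
have H := U_fin (fun i => rep_cls (F i)).
have E : forall j, (forall i, rep (cls (F i)) j = F i j) ->
   (fun i => rep (cls (F i)) j) = (fun i => F i j).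
  by move=> j Hj; apply: functional_extensionality => i; rewrite Hj.
split => /= Hr.
  by apply: U_S (U_I H Hr) => j [/E -> ].
by apply: U_S (U_I H Hr) => j [/E -> ].
Qed.

Lemma los_term (es : nat -> uP) (E : I -> nat -> S) :
  (forall v, cls (fun j => E j v) = es v) ->
  forall t, teval es t = cls (fun j => teval (E j) t).
Proof.
move=> HE; elim => [v|f a IH]; first by rewrite /= HE.
have -> : teval es (tapp a) = @fint L uP f (fun i => teval es (a i)) by [].
have -> : (fun i => teval es (a i)) = (fun i => cls (fun j => teval (E j) (a i))).
  by apply: functional_extensionality => i; rewrite IH.
by rewrite cls_fint.
Qed.

Lemma los (phi : fo_form L) : forall (es : nat -> uP) (E : I -> nat -> S),
  (forall v, cls (fun j => E j v) = es v) ->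
  (sat es phi <-> U (fun j => sat (E j) phi)).
Proof.
elim: phi => [| |t1 t2|r a|p IH|p IHp q IHq|p IHp q IHq|p IHp q IHq|v p IH|v p IH] es E HE /=.
- by split => // H; exfalso; apply: U_F.
- by split => // _; exact: U_T.
- by rewrite !(los_term HE) cls_eq.
- change (@rint L uP r (fun i => teval es (a i)) <-> U (fun j => sat (E j) (fRel a))).
  have -> : (fun i => teval es (a i)) = (fun i => cls (fun j => teval (E j) (a i))).
    by apply: functional_extensionality => i; rewrite (los_term HE).
  exact: cls_rint.
- rewrite (IH _ _ HE); exact: U_neg.
- rewrite (IHp _ _ HE) (IHq _ _ HE); split; first by case; exact: U_I.
  by move=> H; split; apply: U_S H => j [].
- rewrite (IHp _ _ HE) (IHq _ _ HE); split.
    by case; apply: U_S => j; [left|right].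
  move=> H; case: (U_C (fun j => sat (E j) p)) => Hp; first by left.
  by right; apply: U_S (U_I H Hp) => j [[]].
- rewrite (IHp _ _ HE) (IHq _ _ HE); split.
    move=> H; case: (U_C (fun j => sat (E j) p)) => Hp.
      by apply: U_S (H Hp) => j Hq _.
    by apply: U_S Hp => j Hn Hj; exfalso; apply: Hn.
  by move=> H Hp; apply: U_S (U_I H Hp) => j [H1 H2]; exact: H1.
- split.
    move=> [a Ha].
    have HE' : forall w, cls (fun j => upd (E j) v (rep a j) w) = upd es v a w.
      move=> w; rewrite /upd; case: (w == v); [exact: cls_rep | exact: HE].
    move/(IH _ _ HE'): Ha; apply: U_S => j H; by exists (rep a j).
  move=> H.
  pose b j := epsilon (dom_inh S) (fun a => sat (upd (E j) v a) p).
  have HE' : forall w, cls (fun j => upd (E j) v (b j) w) = upd es v (cls b) w.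
    move=> w; rewrite /upd; case: (w == v); [by [] | exact: HE].
  exists (cls b); apply/(IH _ _ HE'); apply: U_S H => j Hj.
  exact: (epsilon_spec (dom_inh S) (fun a => sat (upd (E j) v a) p) Hj).
- split; last first.
    move=> H a.
    have HE' : forall w, cls (fun j => upd (E j) v (rep a j) w) = upd es v a w.
      move=> w; rewrite /upd; case: (w == v); [exact: cls_rep | exact: HE].
    by apply/(IH _ _ HE'); apply: U_S H => j; apply.
  move=> H; case: (U_C (fun j => forall a, sat (upd (E j) v a) p)) => // Hn.
  exfalso.
  pose b j := epsilon (dom_inh S) (fun a => ~ sat (upd (E j) v a) p).
  have HE' : forall w, cls (fun j => upd (E j) v (b j) w) = upd es v (cls b) w.
    move=> w; rewrite /upd; case: (w == v); [by [] | exact: HE].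
  have := H (cls b); move/(IH _ _ HE') => Hs.
  apply: U_F; apply: U_S (U_I Hs Hn) => j [Hj Hnj]; apply: Hnj => a.
  apply: NNPP => Ha.
  have := epsilon_spec (dom_inh S) (fun a => ~ sat (upd (E j) v a) p) (ex_intro _ a Ha).
  by [].
Qed.

End Ultraproduct.

Ltac fext := apply: functional_extensionality.

Section Syn.
Variable L : lang.

Definition mix {X : Type} (B : nat) (w e : nat -> X) : nat -> X :=
  fun v => if v < B then w v else e v.

Lemma teval_ext (S : struc L) (r1 r2 : nat -> S) t : r1 =1 r2 -> teval r1 t = teval r2 t.
Proof. by move=> H; have -> : r1 = r2 by fext. Qed.
Lemma sat_ext (S : struc L) (r1 r2 : nat -> S) phi : r1 =1 r2 -> sat r1 phi <-> sat r2 phi.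
Proof. by move=> H; have -> : r1 = r2 by fext. Qed.
Lemma sat_extP (S : struc L) (r1 r2 : nat -> S) phi : sat r1 phi -> r1 =1 r2 -> sat r2 phi.
Proof. by move=> H1 H; have <- : r1 = r2 by fext. Qed.

Fixpoint exB (B : nat) (phi : fo_form L) : fo_form L :=
  match B with 0 => phi | S B' => exB B' (fEx B' phi) end.

Lemma mixS {X : Type} B (w e : nat -> X) a :
  mix B.+1 (fun v => if v == B then a else w v) e =1 upd (mix B w e) B a.
Proof.
move=> v; rewrite /mix /upd; case: (ltngtP v B) => H.
- by rewrite ltnS ltnW.
- by rewrite ltnS leqNgt H.
- by rewrite ?H ltnSn.
Qed.
Lemma mixS' {X : Type} B (w e : nat -> X) :
  mix B.+1 w e =1 upd (mix B w e) B (w B).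
Proof.
move=> v; rewrite /mix /upd; case: (ltngtP v B) => H.
- by rewrite ltnS ltnW // (ltn_eqF H).
- by rewrite ltnS leqNgt H.
- by rewrite ?H ltnSn.
Qed.

Lemma sat_exB (S : struc L) B : forall phi (e : nat -> S),
  sat e (exB B phi) <-> exists w, sat (mix B w e) phi.
Proof.
elim: B => [|B IH] phi e.
  split; [by move=> H; exists e; apply: (sat_extP H) => v; rewrite /mix | by move=> [w] H; apply: (sat_extP H) => v; rewrite /mix].
rewrite [exB _ _]/= IH; split.
  move=> [w [a Ha]]; exists (fun v => if v == B then a else w v).
  apply: (sat_extP Ha) => v; by rewrite mixS.
move=> [w Hw]; exists w; exists (w B); apply: (sat_extP Hw) => v; by rewrite mixS'.
Qed.

Lemma existential_exB B : forall phi, existential phi -> existential (exB B phi).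
Proof. elim: B => [|B IH] phi H //=; apply: IH; exact: ex_ex. Qed.

Fixpoint exs (ws : seq nat) (phi : fo_form L) : fo_form L :=
  match ws with [::] => phi | w :: ws' => fEx w (exs ws' phi) end.

Lemma sat_exs (S : struc L) ws : forall phi (e : nat -> S),
  sat e (exs ws phi) <-> exists f : nat -> S, sat (fun u => if u \in ws then f u else e u) phi.
Proof.
elim: ws => [|w ws IH] phi e /=.
  split; [by move=> H; exists e | by move=> [f]].
split.
  move=> [a /IH [f Hf]]; exists (fun u => if u \in ws then f u else a).
  apply: (sat_extP Hf) => u; rewrite inE /upd.
  by case: (u \in ws); case: (u == w) => //.
move=> [f Hf]; exists (f w); apply/IH; exists f; apply: (sat_extP Hf) => u.
rewrite inE /upd; case: (u \in ws); rewrite ?orbT ?orbF //; by case: eqP => [->|].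
Qed.

Lemma existential_exs phi : existential phi -> exists ws chi, phi = exs ws chi /\ qf chi.
Proof.
elim => [chi Hq|n p _ [ws [chi [-> Hq]]]]; first by exists [::], chi.
by exists (n :: ws), chi.
Qed.

Lemma ffree_exs ws : forall phi v, ffree v (exs ws phi) -> v \notin ws /\ ffree v phi.
Proof.
elim: ws => [|w ws IH] phi v //= [Hn /IH [H1 H2]]; split => //.
by rewrite inE negb_or H1 andbT; apply/eqP => E; apply: Hn.
Qed.

Section EQ.
Variables (X : Type) (eps : nat -> X).
Definition eqf (v v' : nat) : fo_form L :=
  if excluded_middle_informative (eps v = eps v') then fEq (tvar v) (tvar v') else fTrue.
Fixpoint EQrow (v B : nat) : fo_form L :=
  match B with 0 => fTrue | S B' => fAnd (eqf v B') (EQrow v B') end.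
Fixpoint EQ (B0 B : nat) : fo_form L :=
  match B with 0 => fTrue | S B' => fAnd (EQrow B' B0) (EQ B0 B') end.

Lemma qf_EQrow v B : qf (EQrow v B).
Proof. elim: B => //= B IH; split => //; rewrite /eqf; by case: excluded_middle_informative. Qed.
Lemma qf_EQ B0 B : qf (EQ B0 B).
Proof. elim: B => //= B IH; split => //; exact: qf_EQrow. Qed.

Lemma sat_EQ (S : struc L) (r : nat -> S) B0 B :
  sat r (EQ B0 B) <-> forall v v', v < B -> v' < B0 -> eps v = eps v' -> r v = r v'.
Proof.
have Hrow : forall v B1, sat r (EQrow v B1) <-> forall v', v' < B1 -> eps v = eps v' -> r v = r v'.
  move=> v; elim => [|B1 IH] /=; first by split.
  rewrite IH /eqf; case: excluded_middle_informative => E /=; split.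
  - move=> [H1 H2] v'; rewrite ltnS leq_eqVlt => /orP [/eqP ->|]; [by [] | exact: H2].
  - by move=> H; split; [exact: H | move=> v' Hv'; apply: H; exact: ltnW].
  - move=> [_ H2] v'; rewrite ltnS leq_eqVlt => /orP [/eqP ->|]; [by [] | exact: H2].
  - by move=> H; split => // v' Hv'; apply: H; exact: ltnW.
elim: B => [|B IH] /=; first by split.
rewrite IH Hrow; split.
  move=> [H1 H2] v v'; rewrite ltnS leq_eqVlt => /orP [/eqP ->|]; [exact: H1| exact: H2].
by move=> H; split; [move=> v' Hv'; apply: H | move=> v v' Hv; apply: H; exact: ltnW].
Qed.
End EQ.

Fixpoint rent (r : nat -> nat) (t : fo_term L) : fo_term L :=
  match t with tvar v => tvar (r v) | tapp f a => tapp (fun i => rent r (a i)) end.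
Fixpoint renf (r : nat -> nat) (phi : fo_form L) : fo_form L :=
  match phi with
  | fFalse => fFalse | fTrue => fTrue
  | fEq t1 t2 => fEq (rent r t1) (rent r t2)
  | fRel _ a => fRel (fun i => rent r (a i))
  | fNot p => fNot (renf r p)
  | fAnd p q => fAnd (renf r p) (renf r q)
  | fOr p q => fOr (renf r p) (renf r q)
  | fImp p q => fImp (renf r p) (renf r q)
  | fEx _ _ | fAll _ _ => fFalse
  end.

Lemma teval_ren (S : struc L) (e : nat -> S) r t : teval e (rent r t) = teval (fun v => e (r v)) t.
Proof.
elim: t => [v|f a IH] //=; congr fint; fext => i; exact: IH.
Qed.

Lemma sat_ren (S : struc L) r phi : qf phi -> forall (e : nat -> S),
  sat e (renf r phi) <-> sat (fun v => e (r v)) phi.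
Proof.
elim: phi => [| |t1 t2|R a|p IH|p IHp q IHq|p IHp q IHq|p IHp q IHq|v p IH|v p IH] //= Hq e.
- by rewrite !teval_ren.
- have -> : (fun i => teval e (rent r (a i))) = (fun i => teval (fun v => e (r v)) (a i)) by fext => i; rewrite teval_ren.
  by [].
- by rewrite IH.
- by case: Hq => H1 H2; rewrite IHp // IHq.
- by case: Hq => H1 H2; rewrite IHp // IHq.
- by case: Hq => H1 H2; rewrite IHp // IHq.
Qed.

Lemma qf_ren r phi : qf (renf r phi).
Proof. by elim: phi => //= *; split. Qed.

Fixpoint rwt (w : nat) (bnd : seq nat) (t : fo_term L) : fo_term L :=
  match t with
  | tvar m => if m \in bnd then tvar m else tvar w
  | tapp f a => tapp (fun i => rwt w bnd (a i)) end.
Fixpoint rwf (w : nat) (bnd : seq nat) (phi : fo_form L) : fo_form L :=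
  match phi with
  | fFalse => fFalse | fTrue => fTrue
  | fEq t1 t2 => fEq (rwt w bnd t1) (rwt w bnd t2)
  | fRel _ a => fRel (fun i => rwt w bnd (a i))
  | fNot p => fNot (rwf w bnd p)
  | fAnd p q => fAnd (rwf w bnd p) (rwf w bnd q)
  | fOr p q => fOr (rwf w bnd p) (rwf w bnd q)
  | fImp p q => fImp (rwf w bnd p) (rwf w bnd q)
  | fEx m p => fEx m (rwf w (m :: bnd) p)
  | fAll m p => fAll m (rwf w (m :: bnd) p)
  end.
Fixpoint maxb (phi : fo_form L) : nat :=
  match phi with
  | fNot p => maxb p
  | fAnd p q | fOr p q | fImp p q => maxn (maxb p) (maxb q)
  | fEx m p | fAll m p => maxn m (maxb p)
  | _ => 0
  end.

Lemma teval_rw (S : struc L) (e : nat -> S) w bnd t :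
  teval e (rwt w bnd t) = teval (fun m => if m \in bnd then e m else e w) t.
Proof.
elim: t => [v|f a IH] /=; first by case: (v \in bnd).
congr fint; fext => i; exact: IH.
Qed.

Lemma sat_rw (S : struc L) w phi : maxb phi < w -> forall bnd (e : nat -> S),
  sat e (rwf w bnd phi) <-> sat (fun m => if m \in bnd then e m else e w) phi.
Proof.
elim: phi => [| |t1 t2|R a|p IH|p IHp q IHq|p IHp q IHq|p IHp q IHq|v p IH|v p IH] //= Hw bnd e.
- by rewrite !teval_rw.
- have -> : (fun i => teval e (rwt w bnd (a i))) = (fun i => teval (fun m => if m \in bnd then e m else e w) (a i)) by fext => i; rewrite teval_rw.
  by [].
- by rewrite IH.
- by move: Hw; rewrite gtn_max => /andP [H1 H2]; rewrite IHp // IHq.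
- by move: Hw; rewrite gtn_max => /andP [H1 H2]; rewrite IHp // IHq.
- by move: Hw; rewrite gtn_max => /andP [H1 H2]; rewrite IHp // IHq.
- move: Hw; rewrite gtn_max => /andP [H1 H2].
  have Hwv : (w == v) = false by apply/negbTE; rewrite neq_ltn H1 orbT.
  split => [[a Ha]|[a Ha]]; exists a; move: Ha; rewrite ?IH // => Ha; apply: (sat_extP Ha) => m;
    rewrite /upd inE; case: (m == v) => //=; rewrite Hwv //.
- move: Hw; rewrite gtn_max => /andP [H1 H2].
  have Hwv : (w == v) = false by apply/negbTE; rewrite neq_ltn H1 orbT.
  split => H a; move: (H a); rewrite ?IH // => Ha; apply: (sat_extP Ha) => m;
    rewrite /upd inE; case: (m == v) => //=; rewrite Hwv //.
Qed.

Lemma sat_rw0 (S : struc L) w phi (e : nat -> S) : maxb phi < w ->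
  sat e (rwf w [::] phi) <-> sat (env1 (e w)) phi.
Proof. by move=> H; rewrite sat_rw. Qed.

Lemma tfree_rw w bnd t v : tfree v (rwt w bnd t) -> v = w \/ v \in bnd.
Proof.
elim: t => [m|f a IH] /=.
  by case: ifP => Hm /= <-; [right|left].
by move=> [i /IH].
Qed.

Lemma ffree_rw w phi : forall bnd v, ffree v (rwf w bnd phi) -> v = w \/ v \in bnd.
Proof.
elim: phi => [| |t1 t2|R a|p IH|p IHp q IHq|p IHp q IHq|p IHp q IHq|m p IH|m p IH] bnd v /=.
- by [].
- by [].
- by case; apply: tfree_rw.
- by move=> [i /tfree_rw].
- exact: IH.
- by case; [apply: IHp|apply: IHq].
- by case; [apply: IHp|apply: IHq].
- by case; [apply: IHp|apply: IHq].
- move=> [Hm /IH [->|]]; first by left.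
  rewrite inE => /orP [/eqP E|]; [by exfalso; apply: Hm| by right].
- move=> [Hm /IH [->|]]; first by left.
  rewrite inE => /orP [/eqP E|]; [by exfalso; apply: Hm| by right].
Qed.

Lemma teval_upd_nf (S : struc L) (e : nat -> S) z a t :
  ~ tfree z t -> teval (upd e z a) t = teval e t.
Proof.
elim: t => [v|f a' IH] /= H.
  by rewrite /upd; case: eqP => // E; exfalso; apply: H.
congr fint; fext => i; apply: IH => Hi; apply: H; by exists i.
Qed.

Lemma fin_ex k (P : 'I_k -> nat -> Prop) :
  (forall i B B', B <= B' -> P i B -> P i B') -> (forall i, exists B, P i B) ->
  exists B, forall i, P i B.
Proof.
elim: k P => [|k IH] P Pm HP; first by exists 0 => [[]].
have [B1 H1] := IH (fun i => P (widen_ord (leqnSn k) i)) (fun i => Pm _) (fun i => HP _).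
have [B2 H2] := HP ord_max.
exists (maxn B1 B2) => i.
case: (ltnP i k) => Hi.
  have -> : i = widen_ord (leqnSn k) (Ordinal Hi) by apply: val_inj.
  apply: Pm (H1 _); exact: leq_maxl.
have -> : i = ord_max by apply: val_inj => /=; apply/eqP; rewrite eqn_leq Hi -ltnS ltn_ord.
apply: Pm H2; exact: leq_maxr.
Qed.

Lemma fin_exl (A : Type) k (P : 'I_k -> list A -> Prop) :
  (forall i l l', (forall x, List.In x l -> List.In x l') -> P i l -> P i l') ->
  (forall i, exists l, P i l) -> exists l, forall i, P i l.
Proof.
elim: k P => [|k IH] P Pm HP; first by exists nil => [[]].
have [B1 H1] := IH (fun i => P (widen_ord (leqnSn k) i)) (fun i => Pm _) (fun i => HP _).
have [B2 H2] := HP ord_max.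
exists (B1 ++ B2) => i.
case: (ltnP i k) => Hi.
  have -> : i = widen_ord (leqnSn k) (Ordinal Hi) by apply: val_inj.
  apply: Pm (H1 _) => x Hx; apply: List.in_or_app; by left.
have -> : i = ord_max by apply: val_inj => /=; apply/eqP; rewrite eqn_leq Hi -ltnS ltn_ord.
apply: Pm H2 => x Hx; apply: List.in_or_app; by right.
Qed.

End Syn.

Section CE.
Variables (L : lang) (A : Type).
Notation LC := (lang_consts L A).

Fixpoint cet (k : A -> nat) (t : fo_term LC) : fo_term L :=
  match t with
  | tvar v => tvar v
  | tapp f a => let b := fun i => cet k (a i) in
      (match f as f0 return ('I_(@far LC f0) -> fo_term L) -> fo_term L with
       | inl g => fun b => @tapp L g b
       | inr c => fun _ => tvar (k c) end) b
  end.

Fixpoint cef (k : A -> nat) (phi : fo_form LC) : fo_form L :=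
  match phi with
  | fFalse => fFalse | fTrue => fTrue
  | fEq t1 t2 => fEq (cet k t1) (cet k t2)
  | @fRel _ r a => @fRel L r (fun i => cet k (a i))
  | fNot p => fNot (cef k p)
  | fAnd p q => fAnd (cef k p) (cef k q)
  | fOr p q => fOr (cef k p) (cef k q)
  | fImp p q => fImp (cef k p) (cef k q)
  | fEx m p => fEx m (cef k p)
  | fAll m p => fAll m (cef k p)
  end.

Fixpoint allvt (B : nat) (t : fo_term LC) : Prop :=
  match t with tvar v => v < B | tapp f a => forall i, allvt B (a i) end.
Fixpoint allct (P : A -> Prop) (t : fo_term LC) : Prop :=
  match t with
  | tvar v => True
  | tapp f a => (match f with inl _ => True | inr c => P c end) /\ forall i, allct P (a i) end.
Fixpoint allvf (B : nat) (phi : fo_form LC) : Prop :=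
  match phi with
  | fFalse | fTrue => True
  | fEq t1 t2 => allvt B t1 /\ allvt B t2
  | fRel _ a => forall i, allvt B (a i)
  | fNot p => allvf B p
  | fAnd p q | fOr p q | fImp p q => allvf B p /\ allvf B q
  | fEx m p | fAll m p => m < B /\ allvf B p
  end.
Fixpoint allcf (P : A -> Prop) (phi : fo_form LC) : Prop :=
  match phi with
  | fFalse | fTrue => True
  | fEq t1 t2 => allct P t1 /\ allct P t2
  | fRel _ a => forall i, allct P (a i)
  | fNot p => allcf P p
  | fAnd p q | fOr p q | fImp p q => allcf P p /\ allcf P q
  | fEx m p | fAll m p => allcf P p
  end.

Lemma allct_mono (P Q : A -> Prop) t : (forall c, P c -> Q c) -> allct P t -> allct Q t.
Proof.
move=> PQ; elim: t => [v|f a IH] //=; case: f a IH => [g|c] a IH [H1 H2]; split => //; try exact: PQ;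
  move=> i; exact: IH.
Qed.
Lemma allct_and (P Q : A -> Prop) t : allct P t -> allct Q t -> allct (fun c => P c /\ Q c) t.
Proof.
elim: t => [v|f a IH] //=; case: f a IH => [g|c] a IH [H1 H2] [H3 H4]; split => //; move=> i; exact: IH.
Qed.
Lemma allcf_mono (P Q : A -> Prop) phi : (forall c, P c -> Q c) -> allcf P phi -> allcf Q phi.
Proof.
move=> PQ; elim: phi => //=.
- by move=> t1 t2 [H1 H2]; split; apply: allct_mono PQ _.
- by move=> r a H i; apply: allct_mono PQ _.
- by move=> p IHp q IHq [H1 H2]; split; [apply: IHp|apply: IHq].
- by move=> p IHp q IHq [H1 H2]; split; [apply: IHp|apply: IHq].
- by move=> p IHp q IHq [H1 H2]; split; [apply: IHp|apply: IHq].
Qed.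
Lemma allcf_and (P Q : A -> Prop) phi : allcf P phi -> allcf Q phi -> allcf (fun c => P c /\ Q c) phi.
Proof.
elim: phi => //=.
- by move=> t1 t2 [H1 H2] [H3 H4]; split; apply: allct_and.
- by move=> r a H1 H2 i; apply: allct_and.
- by move=> p IHp q IHq [H1 H2] [H3 H4]; split; [apply: IHp|apply: IHq].
- by move=> p IHp q IHq [H1 H2] [H3 H4]; split; [apply: IHp|apply: IHq].
- by move=> p IHp q IHq [H1 H2] [H3 H4]; split; [apply: IHp|apply: IHq].
Qed.

Lemma cet_eval (S : struc L) (cc : A -> S) (r r' : nat -> S) B k t :
  allvt B t -> allct (fun c => r' (k c) = cc c) t -> (forall v, v < B -> r' v = r v) ->
  teval (M:=@expand_consts L A S cc) r t = teval r' (cet k t).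
Proof.
move=> + + Hr; elim: t => [v|f a IH] /=; first by move=> Hv _; rewrite Hr.
case: f a IH => [g|c] a IH Hv [Hc Ha] /=; last by rewrite Hc.
congr fint; apply: functional_extensionality => i; exact: IH.
Qed.

Lemma cef_sat (S : struc L) (cc : A -> S) B k phi :
  allvf B phi -> allcf (fun c => B <= k c) phi ->
  forall (r r' : nat -> S), allcf (fun c => r' (k c) = cc c) phi -> (forall v, v < B -> r' v = r v) ->
  (sat (M:=@expand_consts L A S cc) r phi <-> sat r' (cef k phi)).
Proof.
elim: phi => [| |t1 t2|R a|p IH|p IHp q IHq|p IHp q IHq|p IHp q IHq|m p IH|m p IH] /=.
- by [].
- by [].
- move=> [H1 H2] _ r r' [H3 H4] Hr; by rewrite (cet_eval H1 H3 Hr) (cet_eval H2 H4 Hr).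
- move=> H1 _ r r' H3 Hr.
  have -> : (fun i => teval (M:=@expand_consts L A S cc) r (a i)) = (fun i => teval r' (cet k (a i))).
    by apply: functional_extensionality => i; apply: cet_eval.
  by [].
- by move=> H1 H2 r r' H3 Hr; rewrite (IH H1 H2 r r' H3 Hr).
- by move=> [H1 H1'] [H2 H2'] r r' [H3 H3'] Hr; rewrite (IHp H1 H2 r r' H3 Hr) (IHq H1' H2' r r' H3' Hr).
- by move=> [H1 H1'] [H2 H2'] r r' [H3 H3'] Hr; rewrite (IHp H1 H2 r r' H3 Hr) (IHq H1' H2' r r' H3' Hr).
- by move=> [H1 H1'] [H2 H2'] r r' [H3 H3'] Hr; rewrite (IHp H1 H2 r r' H3 Hr) (IHq H1' H2' r r' H3' Hr).
- move=> [Hm H1] H2 r r' H3 Hr.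
  have K : forall a, (sat (M:=@expand_consts L A S cc) (upd r m a) p <-> sat (upd r' m a) (cef k p)).
    move=> a; apply: IH => //.
      apply: allcf_mono (allcf_and H2 H3) => c [Hc1 Hc2].
      by rewrite /upd; case: eqP => // E; move: Hm; rewrite -E ltnNge Hc1.
    by move=> v Hv; rewrite /upd; case: eqP => //; rewrite Hr.
  by split => [[a Ha]|[a Ha]]; exists a; apply/K.
- move=> [Hm H1] H2 r r' H3 Hr.
  have K : forall a, (sat (M:=@expand_consts L A S cc) (upd r m a) p <-> sat (upd r' m a) (cef k p)).
    move=> a; apply: IH => //.
      apply: allcf_mono (allcf_and H2 H3) => c [Hc1 Hc2].
      by rewrite /upd; case: eqP => // E; move: Hm; rewrite -E ltnNge Hc1.
    by move=> v Hv; rewrite /upd; case: eqP => //; rewrite Hr.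
  by split => Ha a; apply/K.
Qed.

Lemma allvt_mono B B' t : B <= B' -> allvt B t -> allvt B' t.
Proof. move=> HB; elim: t => [v|f a IH] /=; [move=> H; exact: leq_trans H HB| move=> H i; exact: IH]. Qed.
Lemma allvf_mono B B' phi : B <= B' -> allvf B phi -> allvf B' phi.
Proof.
move=> HB; elim: phi => //=.
- by move=> t1 t2 [H1 H2]; split; apply: allvt_mono HB _.
- by move=> r a H i; apply: allvt_mono HB _.
- by move=> p IHp q IHq [H1 H2]; split; [apply: IHp|apply: IHq].
- by move=> p IHp q IHq [H1 H2]; split; [apply: IHp|apply: IHq].
- by move=> p IHp q IHq [H1 H2]; split; [apply: IHp|apply: IHq].
- by move=> m p IH [H1 H2]; split; [exact: leq_trans H1 HB| exact: IH].
- by move=> m p IH [H1 H2]; split; [exact: leq_trans H1 HB| exact: IH].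
Qed.

Lemma allvt_ex t : exists B, allvt B t.
Proof.
elim: t => [v|f a IH] /=; first by exists v.+1.
apply: (fin_ex (P := fun i B => allvt B (a i))) => // i B B' HB; exact: allvt_mono.
Qed.
Lemma allct_ex t : exists cs, allct (fun c => List.In c cs) t.
Proof.
elim: t => [v|f a IH] /=; first by exists nil.
have [cs Hcs] : exists cs, forall i, allct (fun c => List.In c cs) (a i).
  apply: (fin_exl (P := fun i cs => allct (fun c => List.In c cs) (a i))) => // i l l' Hl.
  by apply: allct_mono => c /Hl.
case: f a IH Hcs => [g|c] a IH Hcs.
  by exists cs; split.
exists (c :: cs); split; first by left.
by move=> i; apply: allct_mono (Hcs i) => c' Hc'; right.
Qed.

Lemma allf_ex phi : exists B cs, allvf B phi /\ allcf (fun c => List.In c cs) phi.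
Proof.
elim: phi => /=.
- by exists 0, nil.
- by exists 0, nil.
- move=> t1 t2; have [B1 H1] := allvt_ex t1; have [B2 H2] := allvt_ex t2.
  have [c1 H3] := allct_ex t1; have [c2 H4] := allct_ex t2.
  exists (maxn B1 B2), (c1 ++ c2); split; split.
  + exact: allvt_mono (leq_maxl _ _) H1.
  + exact: allvt_mono (leq_maxr _ _) H2.
  + by apply: allct_mono H3 => c Hc; apply: List.in_or_app; left.
  + by apply: allct_mono H4 => c Hc; apply: List.in_or_app; right.
- move=> r a.
  have [B HB] : exists B, forall i, allvt B (a i).
    apply: (fin_ex (P := fun i B => allvt B (a i))); last by move=> i; exact: allvt_ex.
    move=> i B B' HB; exact: allvt_mono.
  have [cs Hcs] : exists cs, forall i, allct (fun c => List.In c cs) (a i).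
    apply: (fin_exl (P := fun i cs => allct (fun c => List.In c cs) (a i))); last by move=> i; exact: allct_ex.
    by move=> i l l' Hl; apply: allct_mono => c /Hl.
  by exists B, cs.
- by move=> p [B [cs H]]; exists B, cs.
- move=> p [B1 [c1 [H1 H2]]] q [B2 [c2 [H3 H4]]].
  exists (maxn B1 B2), (c1 ++ c2); split; split.
  + exact: allvf_mono (leq_maxl _ _) H1.
  + exact: allvf_mono (leq_maxr _ _) H3.
  + by apply: (allcf_mono _ H2) => c Hc; apply: List.in_or_app; left.
  + by apply: allcf_mono H4 => c Hc; apply: List.in_or_app; right.
- move=> p [B1 [c1 [H1 H2]]] q [B2 [c2 [H3 H4]]].
  exists (maxn B1 B2), (c1 ++ c2); split; split.
  + exact: allvf_mono (leq_maxl _ _) H1.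
  + exact: allvf_mono (leq_maxr _ _) H3.
  + by apply: (allcf_mono _ H2) => c Hc; apply: List.in_or_app; left.
  + by apply: allcf_mono H4 => c Hc; apply: List.in_or_app; right.
- move=> p [B1 [c1 [H1 H2]]] q [B2 [c2 [H3 H4]]].
  exists (maxn B1 B2), (c1 ++ c2); split; split.
  + exact: allvf_mono (leq_maxl _ _) H1.
  + exact: allvf_mono (leq_maxr _ _) H3.
  + by apply: (allcf_mono _ H2) => c Hc; apply: List.in_or_app; left.
  + by apply: allcf_mono H4 => c Hc; apply: List.in_or_app; right.
- move=> m p [B [cs [H1 H2]]]; exists (maxn m.+1 B), cs; split => //; split.
  + exact: leq_maxl.
  + exact: allvf_mono (leq_maxr _ _) H1.
- move=> m p [B [cs [H1 H2]]]; exists (maxn m.+1 B), cs; split => //; split.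
  + exact: leq_maxl.
  + exact: allvf_mono (leq_maxr _ _) H1.
Qed.

Fixpoint idx (cs : list A) (c : A) : nat :=
  match cs with
  | nil => 0
  | x :: cs' => if excluded_middle_informative (x = c) then 0 else (idx cs' c).+1
  end.
Lemma idx_nth cs c : List.In c cs -> List.nth_error cs (idx cs c) = Some c.
Proof.
elim: cs => [|x cs IH] //= H; case: excluded_middle_informative => [E|Hx] /=; first by rewrite E.
by case: H => [E|H]; [exfalso; apply: Hx| exact: IH].
Qed.

Lemma ce_main (phi : fo_form LC) : exists (psi : fo_form L) (B : nat) (k : A -> nat) (cs : list A),
  (forall (S : struc L) (cc : A -> S) (r r' : nat -> S),
     (forall v, v < B -> r' v = r v) -> (forall c, List.In c cs -> r' (k c) = cc c) ->
     (sat (M:=@expand_consts L A S cc) r phi <-> sat r' psi)) /\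
  (forall (S : struc L) (cc : A -> S) (r : nat -> S), exists r' : nat -> S,
     (forall v, v < B -> r' v = r v) /\ (forall c, List.In c cs -> r' (k c) = cc c)).
Proof.
have [B [cs [H1 H2]]] := allf_ex phi.
pose k c := B + idx cs c.
exists (cef k phi), B, k, cs; split.
  move=> S cc r r' Hr Hc; apply: (cef_sat (B:=B)) => //.
    by apply: (allcf_mono _ H2) => c _; exact: leq_addr.
  by apply: (allcf_mono _ H2) => c /Hc.
move=> S cc r.
exists (fun v => if v < B then r v else
          match List.nth_error cs (v - B) with Some c => cc c | None => r v end).
split; first by move=> v ->.
move=> c Hc; rewrite /k ltnNge leq_addr /= addKn idx_nth //.
Qed.

End CE.

Section Comb.
Variable X : Type.
Definition combA (B1 : nat) (a1 a2 : nat -> X) (u : nat) : X :=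
  if u < B1 then a1 u else a2 (u - B1).
Definition combP (B1 B2 : nat) (p1 p2 : nat -> X) (u : nat) : X :=
  let d := u - (B1 + B2) in if odd d then p2 (B2 + d./2) else p1 (B1 + d./2).
Definition r1 (B1 B2 : nat) (v : nat) : nat := if v < B1 then v else (B1 + B2) + (v - B1).*2.
Definition r2 (B1 B2 : nat) (v : nat) : nat := if v < B2 then B1 + v else (B1 + B2) + (v - B2).*2.+1.

Lemma comb1 B1 B2 (a1 a2 p1 p2 : nat -> X) v :
  mix (B1 + B2) (combA B1 a1 a2) (combP B1 B2 p1 p2) (r1 B1 B2 v) = mix B1 a1 p1 v.
Proof.
rewrite /mix /r1 /combA /combP; case: (ltnP v B1) => Hv.
  by rewrite (leq_trans Hv (leq_addr _ _)) Hv.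
have -> : (B1 + B2 + (v - B1).*2 < B1 + B2) = false by lia.
have -> : B1 + B2 + (v - B1).*2 - (B1 + B2) = (v - B1).*2 by lia.
rewrite odd_double; congr p1; lia.
Qed.

Lemma comb2 B1 B2 (a1 a2 p1 p2 : nat -> X) v :
  mix (B1 + B2) (combA B1 a1 a2) (combP B1 B2 p1 p2) (r2 B1 B2 v) = mix B2 a2 p2 v.
Proof.
rewrite /mix /r2 /combA /combP; case: (ltnP v B2) => Hv.
  have -> : B1 + v < B1 + B2 by lia.
  have -> : B1 + v < B1 = false by lia.
  by congr a2; lia.
have -> : (B1 + B2 + (v - B2).*2.+1 < B1 + B2) = false by lia.
have -> : B1 + B2 + (v - B2).*2.+1 - (B1 + B2) = (v - B2).*2.+1 by lia.
rewrite /= odd_double /=; congr p2; lia.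
Qed.
End Comb.

Lemma comb_map (X Y : Type) (h : X -> Y) B1 B2 (p1 p2 : nat -> X) u :
  h (combP B1 B2 p1 p2 u) = combP B1 B2 (h \o p1) (h \o p2) u.
Proof. by rewrite /combP; case: odd. Qed.
Lemma combA_map (X Y : Type) (h : X -> Y) B1 (p1 p2 : nat -> X) u :
  h (combA B1 p1 p2 u) = combA B1 (h \o p1) (h \o p2) u.
Proof. by rewrite /combA; case: ifP. Qed.

Section Fwd.
Variables (L : lang) (K : fieldType) (T : theory L) (D : vsdef L K) (C : kconf K)
  (M : struc L) (th : M -> M).
Hypothesis MC : model_complete T.
Hypothesis EC : ec_model_TthC T D C th.
Variables (N : struc L) (th' : N -> N) (h : M -> N).
Hypothesis HN : model_TthC T D C th'.
Hypothesis Hemb : embedding (M := expand_theta th) (N := expand_theta th') h.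

Notation Lt := (lang_theta L).
Notation Mt := (expand_theta th).
Notation Nt := (expand_theta th').

Record fact : Type := Fact {
  fphi : fo_form Lt; fB : nat; feps : nat -> N; fe : nat -> M;
  fqf : qf fphi;
  fsat : sat (M := Nt) (mix fB feps (h \o fe)) fphi }.

Definition Phi (j : fact) : fo_form Lt := exB (fB j) (fAnd (fphi j) (EQ Lt (feps j) (fB j) (fB j))).

Lemma wit_ex (j : fact) : exists w : nat -> M, sat (M := Mt) (mix (fB j) w (fe j)) (fAnd (fphi j) (EQ Lt (feps j) (fB j) (fB j))).
Proof.
have H : sat (M := Mt) (fe j) (Phi j).
  case: EC => _ H; apply: (H N th' h HN Hemb).
    apply: existential_exB; apply: ex_qf; split; [exact: fqf| exact: qf_EQ].
  apply/sat_exB; exists (feps j); split; first exact: fsat.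
  by apply/sat_EQ => v v' Hv Hv' E; rewrite /mix Hv Hv'.
by move/sat_exB: H.
Qed.

Definition W (j : fact) : nat -> M := proj1_sig (constructive_indefinite_description _ (wit_ex j)).
Lemma W_sat j : sat (M := Mt) (mix (fB j) (W j) (fe j)) (fphi j).
Proof. rewrite /W; case: constructive_indefinite_description => w [H _] //. Qed.
Lemma W_eq j v v' : v < fB j -> v' < fB j -> feps j v = feps j v' -> W j v = W j v'.
Proof.
rewrite /W; case: constructive_indefinite_description => w [_ /sat_EQ H] /= Hv Hv' E.
by have := H v v' Hv Hv' E; rewrite /mix Hv Hv'.
Qed.

Definition m0 : M := epsilon (dom_inh M) (fun _ => True).

Definition G (y : N) (j : fact) : M :=
  match excluded_middle_informative (exists v, v < fB j /\ feps j v = y) with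
  | left H => W j (proj1_sig (constructive_indefinite_description _ H))
  | right _ => m0
  end.

Lemma G_key j v : v < fB j -> G (feps j v) j = W j v.
Proof.
move=> Hv; rewrite /G; case: excluded_middle_informative => [H|H]; last first.
  by exfalso; apply: H; exists v.
case: constructive_indefinite_description => v' [Hv' E] /=; exact: W_eq.
Qed.

Definition SF (F : fact) : fact -> Prop := fun j =>
  sat (M := Mt) (mix (fB F) (fun v => G (feps F v) j) (fe F)) (fphi F).

Lemma SF_self F : SF F F.
Proof.
rewrite /SF; apply: (sat_extP (W_sat F)) => v; rewrite /mix; case: ifP => // Hv.
by rewrite G_key.
Qed.

Definition combF (F1 F2 : fact) : fact.
refine (@Fact (fAnd (renf (r1 (fB F1) (fB F2)) (fphi F1)) (renf (r2 (fB F1) (fB F2)) (fphi F2)))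
   (fB F1 + fB F2) (combA (fB F1) (feps F1) (feps F2)) (combP (fB F1) (fB F2) (fe F1) (fe F2)) _ _).
- by split; apply: qf_ren.
- split; apply/sat_ren; try exact: fqf.
  + apply: (sat_extP (fsat F1)) => v; rewrite -(comb1 (fB F1) (fB F2) (feps F1) (feps F2) (h \o fe F1) (h \o fe F2) v).
    rewrite /mix /=; case: ifP => _ //; by rewrite (comb_map h).
  + apply: (sat_extP (fsat F2)) => v; rewrite -(comb2 (fB F1) (fB F2) (feps F1) (feps F2) (h \o fe F1) (h \o fe F2) v).
    rewrite /mix /=; case: ifP => _ //; by rewrite (comb_map h).
Defined.

Lemma SF_comb F1 F2 j : SF (combF F1 F2) j -> SF F1 j /\ SF F2 j.
Proof.
rewrite /SF /= => -[/sat_ren H1 /sat_ren H2]; split.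
  move: (H1 (fqf F1)) => {}H1; apply: (sat_extP H1) => v.
  rewrite -(comb1 (fB F1) (fB F2) (fun v => G (feps F1 v) j) (fun v => G (feps F2 v) j) (fe F1) (fe F2) v).
  by rewrite /mix; case: ifP => // _; rewrite /combA; case: ifP.
move: (H2 (fqf F2)) => {}H2; apply: (sat_extP H2) => v.
rewrite -(comb2 (fB F1) (fB F2) (fun v => G (feps F1 v) j) (fun v => G (feps F2 v) j) (fe F1) (fe F2) v).
by rewrite /mix; case: ifP => // _; rewrite /combA; case: ifP.
Qed.

Definition trivF : fact.
refine (@Fact fTrue 0 (fun _ => h m0) (fun _ => m0) _ _); by [].
Defined.

Lemma U_exists : exists U, isUltra U /\ forall F, U (SF F).
Proof.
have [U [HU H]] : exists U, isUltra U /\ forall A, (exists F, A = SF F) -> U A.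
  apply: ultra_ex.
  - by exists (SF trivF), trivF.
  - move=> A [F ->]; exists F; exact: SF_self.
  - move=> A B [F1 ->] [F2 ->]; exists (SF (combF F1 F2)); split; first by exists (combF F1 F2).
    move=> j; exact: SF_comb.
exists U; split => // F; apply: H; by exists F.
Qed.


Variable U : (fact -> Prop) -> Prop.
Hypothesis HU : isUltra U.
Hypothesis HUF : forall F, U (SF F).

Lemma pin_h a : U (fun j => G (h a) j = a).
Proof.
have Hs : sat (M := Nt) (mix 1 (fun _ => h a) (h \o (fun _ => a))) (fEq (tvar 0) (tvar 1)) by [].
apply: (U_S HU _ (HUF (@Fact (fEq (tvar 0) (tvar 1)) 1 (fun _ => h a) (fun _ => a) I Hs))) => j.
by rewrite /SF.
Qed.

Lemma pin_th y : U (fun j => G (th' y) j = th (G y j)).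
Proof.
pose phi : fo_form Lt := fEq (@tapp Lt None (fun _ => tvar 0)) (tvar 1).
pose eps := fun v : nat => if v == 0 then y else th' y.
have Hs : sat (M := Nt) (mix 2 eps (h \o (fun _ => m0))) phi by [].
apply: (U_S HU _ (HUF (@Fact phi 2 eps (fun _ => m0) I Hs))) => j.
by rewrite /SF /=.
Qed.

Lemma pin_f (f : Defs.fsym L) (a : 'I_(far f) -> N) : U (fun j => G (@fint L N f a) j = @fint L M f (fun i => G (a i) j)).
Proof.
pose phi : fo_form Lt := fEq (@tapp Lt (Some f) (fun i => tvar i)) (tvar (far f)).
pose eps := fun v : nat => if (insub v : option 'I_(far f)) is Some i then a i else @fint L N f a.
have Heps : forall i : 'I_(far f), eps i = a i by move=> i; rewrite /eps valK.
have Heps' : eps (far f) = @fint L N f a by rewrite /eps insubN // ltnn.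
have Hs : sat (M := Nt) (mix (far f).+1 eps (h \o (fun _ => m0))) phi.
  rewrite /= /mix ltnSn Heps'; congr fint; apply: functional_extensionality => i.
  by rewrite (ltn_trans (ltn_ord i) (ltnSn _)) Heps.
apply: (U_S HU _ (HUF (@Fact phi (far f).+1 eps (fun _ => m0) I Hs))) => j.
rewrite /SF /= /mix ltnSn Heps' => <-; congr fint; apply: functional_extensionality => i.
by rewrite (ltn_trans (ltn_ord i) (ltnSn _)) Heps.
Qed.

Lemma pin_ne y y' : y <> y' -> U (fun j => G y j <> G y' j).
Proof.
move=> Hy.
pose phi : fo_form Lt := fNot (fEq (tvar 0) (tvar 1)).
pose eps := fun v : nat => if v == 0 then y else y'.
have Hs : sat (M := Nt) (mix 2 eps (h \o (fun _ => m0))) phi by [].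
apply: (U_S HU _ (HUF (@Fact phi 2 eps (fun _ => m0) I Hs))) => j.
by rewrite /SF /=.
Qed.

Lemma pin_r (r : Defs.rsym L) (a : 'I_(rar r) -> N) (b : bool) :
  (@rint L N r a <-> b) -> U (fun j => @rint L M r (fun i => G (a i) j) <-> b).
Proof.
move=> Hb.
pose eps := fun v : nat => if (insub v : option 'I_(rar r)) is Some i then a i else h m0.
have Heps : forall i : 'I_(rar r), eps i = a i by move=> i; rewrite /eps valK.
pose at0 : fo_form Lt := @fRel Lt r (fun i => tvar i).
have E1 : forall (S : struc L) (t : S -> S) (w e : nat -> S),
    sat (M := expand_theta t) (mix (rar r) w e) at0 <-> @rint L S r (fun i => w i).
  move=> S t w e /=; have -> // : (fun i : 'I_(rar r) => mix (rar r) w e i) = (fun i => w i).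
  by apply: functional_extensionality => i; rewrite /mix ltn_ord.
have HA : (fun i : 'I_(rar r) => eps i) = a by apply: functional_extensionality => i; rewrite Heps.
case: b Hb => Hb.
  have Hs : sat (M := Nt) (mix (rar r) eps (h \o (fun _ => m0))) at0.
    by apply/E1; rewrite HA; apply/Hb.
  apply: (U_S HU _ (HUF (@Fact at0 (rar r) eps (fun _ => m0) I Hs))) => j.
  rewrite /SF => /E1 H; split => // _.
  by have -> : (fun i => G (a i) j) = (fun i => G (eps i) j) by apply: functional_extensionality => i; rewrite Heps.
have Hs : sat (M := Nt) (mix (rar r) eps (h \o (fun _ => m0))) (fNot at0).
  by move/E1; rewrite HA => /Hb.
apply: (U_S HU _ (HUF (@Fact (fNot at0) (rar r) eps (fun _ => m0) I Hs))) => j.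
move=> H; have {}H : ~ sat (M := Mt) (mix (rar r) (fun v => G (eps v) j) (fun _ => m0)) at0 := H.
split => // H'; exfalso; apply: H; apply/E1.
by have <- : (fun i => G (a i) j) = (fun i => G (eps i) j) by apply: functional_extensionality => i; rewrite Heps.
Qed.

Notation MS := (uP M U).
Definition g (y : N) : MS := cls U (G y).
Definition thS (a : MS) : MS := cls U (fun j => th (rep a j)).

Lemma thS_cls f : thS (cls U f) = cls U (fun j => th (f j)).
Proof. apply/(cls_eq HU); apply: (U_S HU _ (rep_cls HU f)) => j ->; done. Qed.

Lemma g_th y : g (th' y) = thS (g y).
Proof. rewrite /g thS_cls; apply/(cls_eq HU); exact: pin_th. Qed.

Lemma g_iter i y : g (iter i th' y) = iter i thS (g y).
Proof. elim: i => //= i IH; by rewrite g_th IH. Qed.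

Lemma iter_cls i f : iter i thS (cls U f) = cls U (fun j => iter i th (f j)).
Proof. elim: i => //= i ->; by rewrite thS_cls. Qed.

Lemma g_h a : g (h a) = cls U (fun _ => a).
Proof. apply/(cls_eq HU); exact: pin_h. Qed.

Lemma g_emb : embedding (M := N) (N := MS) g.
Proof.
split; [|split].
- move=> y y' /(cls_eq HU) E; apply: NNPP => Hne.
  apply: (U_F HU); apply: (U_S HU _ (U_I HU E (pin_ne Hne))) => j [E1 E2]; exact: E2 E1.
- move=> f a; rewrite /g; change (cls U (G (@fint L N f a)) = @fint L MS f (fun i => cls U (G (a i)))).
  rewrite (cls_fint HU); apply/(cls_eq HU); exact: pin_f.
- move=> r a; change (@rint L N r a <-> @rint L MS r (fun i => cls U (G (a i)))).
  rewrite (cls_rint HU); case: (classic (@rint L N r a)) => Hr.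
    have H := @pin_r r a true; have {}H := H (conj (fun _ => isT) (fun _ => Hr)).
    split => // _; apply: (U_S HU _ H) => j [_ ]; by apply.
  have H := @pin_r r a false.
  have {}H : U (fun j => @rint L M r (fun i => G (a i) j) <-> false) by apply: H; split => // /Hr.
  split => // H'; exfalso; apply: (U_F HU); apply: (U_S HU _ (U_I HU H H')) => j [[H1 _] H2].
  by have := H1 H2.
Qed.

Lemma MS_model : is_model T MS.
Proof.
move=> phi Hphi es.
have HE : forall v, cls U (fun j => rep (es v) j) = es v by move=> v; rewrite cls_rep.
apply/(@los _ _ _ _ HU phi es (fun j v => rep (es v) j) HE).
apply: (U_all HU) => j; case: EC => [[HM _] _]; exact: HM.
Qed.

Lemma G_V y : inV D y -> U (fun j => inV D (G y j)).
Proof.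
move=> Hy.
have H : inV D (g y).
  case: HN => HNT _.
  exact: (proj1 (MC HNT MS_model g_emb (vs_set D) (env1 y)) Hy).
by move: H; rewrite /inV (@los _ _ _ _ HU (vs_set D) _ (fun j => env1 (G y j))).
Qed.

Lemma sat_struc_ext (L' : lang) (X : Type) (i1 i2 : inhabited X) f1 f2 (r : forall r : Defs.rsym L', ('I_(rar r) -> X) -> Prop) :
  f1 = f2 -> forall (e : nat -> X) phi,
  sat (M := @Struc L' X i1 f1 r) e phi -> sat (M := @Struc L' X i2 f2 r) e phi.
Proof. by move=> E; subst f2; rewrite (proof_irrelevance _ i1 i2). Qed.

Lemma MS_consts (e : nat -> MS) phi :
  sat (M := @expand_consts L M MS (fun c => cls U (fun _ => c))) e phi ->
  sat (M := uP (@expand_consts L M M (fun x => x)) U) e phi.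
Proof.
apply: sat_struc_ext.
apply: functional_extensionality_dep => -[f|c]; apply: functional_extensionality => a //.
Qed.

Lemma fwd_main n (psi : fo_form (lang_consts L M)) (x : nat -> N) :
  (forall k, k < n -> inV D (x k)) -> sat (M := expand_consts h) (penv th' x) psi ->
  sat_exV_theta D th (fun x => x) n psi.
Proof.
move=> HxV Hpsi.
have [psi' [B [k [cs [Hsat Hex]]]]] := ce_main psi.
have [rN [HrN1 HrN2]] := Hex N h (penv th' x).
have H1 : sat rN psi' by apply/(Hsat _ _ _ _ HrN1 HrN2).
have H2 : sat (g \o rN) psi'.
  case: HN => HNT _; exact: (proj1 (MC HNT MS_model g_emb psi' rN) H1).
have H3 : sat (M := @expand_consts L M MS (fun c => cls U (fun _ => c))) (penv thS (g \o x)) psi.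
  apply/(Hsat _ _ _ (g \o rN)).
  - move=> v Hv; rewrite /= HrN1 // /penv; case: (Cantor.of_nat v) => kk i; exact: g_iter.
  - by move=> c Hc; rewrite /= HrN2 // g_h.
  - exact: H2.
move/MS_consts: H3.
rewrite (@los _ (@expand_consts L M M (fun x => x)) _ _ HU psi _ (fun j => penv th (fun kk => G (x kk) j))); last first.
  move=> v; rewrite /penv; case: (Cantor.of_nat v) => kk i /=; by rewrite iter_cls.
move=> H4.
have H5 : U (fun j => forall i : 'I_n, inV D (G (x i) j)).
  apply: (U_fin HU) => i; apply: G_V; exact: HxV.
have [j [Hj1 Hj2]] := U_ex HU (U_I HU H4 H5).
exists (fun kk => G (x kk) j); split => // kk Hk.
exact: (Hj2 (Ordinal Hk)).
Qed.

End Fwd.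


Section Lift.
Variables (L : lang) (A : Type).
Notation LC := (lang_consts L A).
Fixpoint liftt (t : fo_term L) : fo_term LC :=
  match t with tvar v => tvar v | tapp f a => @tapp LC (inl f) (fun i => liftt (a i)) end.
Fixpoint liftf (phi : fo_form L) : fo_form LC :=
  match phi with
  | fFalse => fFalse | fTrue => fTrue
  | fEq t1 t2 => fEq (liftt t1) (liftt t2)
  | @fRel _ r a => @fRel LC r (fun i => liftt (a i))
  | fNot p => fNot (liftf p)
  | fAnd p q => fAnd (liftf p) (liftf q)
  | fOr p q => fOr (liftf p) (liftf q)
  | fImp p q => fImp (liftf p) (liftf q)
  | fEx m p => fEx m (liftf p)
  | fAll m p => fAll m (liftf p)
  end.
Lemma teval_lift (S : struc L) (cc : A -> S) (r : nat -> S) t :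
  teval (M := @expand_consts L A S cc) r (liftt t) = teval r t.
Proof. elim: t => [v|f a IH] //=; congr fint; apply: functional_extensionality => i; exact: IH. Qed.
Lemma sat_lift (S : struc L) (cc : A -> S) phi : forall (r : nat -> S),
  sat (M := @expand_consts L A S cc) r (liftf phi) <-> sat r phi.
Proof.
elim: phi => [| |t1 t2|R a|p IH|p IHp q IHq|p IHp q IHq|p IHp q IHq|m p IH|m p IH] r //=.
- by rewrite !teval_lift.
- have -> // : (fun i => teval (M := @expand_consts L A S cc) r (liftt (a i))) = (fun i => teval r (a i)).
  by apply: functional_extensionality => i; rewrite teval_lift.
- by rewrite IH.
- by rewrite IHp IHq.
- by rewrite IHp IHq.
- by rewrite IHp IHq.
- by split => -[a Ha]; exists a; move: Ha; rewrite IH.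
- by split => H a; move: (H a); rewrite IH.
Qed.
Lemma tfree_lift v t : tfree v (liftt t) -> tfree v t.
Proof. elim: t => [m|f a IH] //= [i /IH H]; by exists i. Qed.
Lemma ffree_lift v phi : ffree v (liftf phi) -> ffree v phi.
Proof.
elim: phi => //=.
- by move=> t1 t2 [/tfree_lift|/tfree_lift]; [left|right].
- by move=> r a [i /tfree_lift H]; exists i.
- by move=> p IHp q IHq [/IHp|/IHq]; [left|right].
- by move=> p IHp q IHq [/IHp|/IHq]; [left|right].
- by move=> p IHp q IHq [/IHp|/IHq]; [left|right].
- by move=> m p IH [H1 /IH H2].
- by move=> m p IH [H1 /IH H2].
Qed.
End Lift.

Fixpoint code (p : seq nat) : nat :=
  match p with [::] => 0 | i :: p' => (Cantor.to_nat (i, code p')).+1 end.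
Fixpoint decF (fuel k : nat) : seq nat :=
  match fuel with
  | 0 => [::]
  | S f => match k with 0 => [::] | S m => let (i, m') := Cantor.of_nat m in i :: decF f m' end
  end.
Definition dec (k : nat) : seq nat := decF k k.

Lemma decF_code p : forall fuel, code p <= fuel -> decF fuel (code p) = p.
Proof.
elim: p => [|i p IH] fuel H; first by case: fuel H.
case: fuel H => [|fuel] H //.
transitivity (let (i', m') := Cantor.of_nat (Cantor.to_nat (i, code p)) in i' :: decF fuel m'); first by [].
rewrite Cantor.cancel_of_to IH //.
have := Cantor.to_nat_non_decreasing i (code p); move: H => /=; lia.
Qed.
Lemma dec_code p : dec (code p) = p.
Proof. exact: decF_code. Qed.

Definition pvar' (k i : nat) : nat := Cantor.to_nat (k, i).
Lemma pvar_inj k i k' i' : Cantor.to_nat (k, i) = Cantor.to_nat (k', i') -> k = k' /\ i = i'.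
Proof. move=> /(f_equal Cantor.of_nat); rewrite !Cantor.cancel_of_to; by case. Qed.

Section BigAnd.
Variable L : lang.
Definition bigAnd k (F : 'I_k -> fo_form L) : fo_form L :=
  foldr (fun i acc => fAnd (F i) acc) fTrue (enum 'I_k).
Lemma sat_bigAnd (S : struc L) (r : nat -> S) k (F : 'I_k -> fo_form L) :
  sat r (bigAnd F) <-> forall i, sat r (F i).
Proof.
rewrite /bigAnd.
have H : forall l : seq 'I_k, sat r (foldr (fun i acc => fAnd (F i) acc) fTrue l) <-> forall i, i \in l -> sat r (F i).
  elim => [|j l IH] /=; first by split.
  rewrite IH; split.
    by move=> [H1 H2] i; rewrite inE => /orP [/eqP ->|/H2].
  move=> H; split; first by apply: H; rewrite inE eqxx.
  by move=> i Hi; apply: H; rewrite inE Hi orbT.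
rewrite H; split => H' i //; apply: H'; by rewrite mem_enum.
Qed.
Lemma ffree_bigAnd v k (F : 'I_k -> fo_form L) : ffree v (bigAnd F) -> exists i, ffree v (F i).
Proof.
rewrite /bigAnd; elim: (enum 'I_k) => [|j l IH] //= [H|/IH //]; by exists j.
Qed.
End BigAnd.

Section Tr.
Variables (L : lang) (M : struc L).
Notation Lt := (lang_theta L).
Notation LM := (lang_consts L M).
Variables (n : nat) (vs : seq nat) (e : nat -> M) (z : nat) (c0 : M) (vsset : fo_form L).

Definition yvar (v : nat) : nat := pvar (n + v.*2) 0.
Definition cst (a : M) : fo_term LM := @tapp LM (inr a) (fun _ => tvar 0).
Definition cond (s : fo_term LM) (c : nat) : fo_form LM :=
  fOr (fEq s (tvar (pvar c 0)))
      (fAnd (fEx z (fAnd (fEq (tvar z) s) (fNot (@liftf L M (rwf z [::] vsset)))))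
            (fEq (tvar (pvar c 1)) (cst c0))).

Fixpoint trt (p : seq nat) (t : fo_term Lt) {struct t} : fo_term LM * fo_form LM :=
  match t with
  | tvar v => (if v \in vs then tvar (yvar v) else cst (e v), fTrue)
  | @tapp _ f a =>
    let b := fun i : 'I_(@far Lt f) => trt (nat_of_ord i :: p) (a i) in
    (match f as f0 return ('I_(@far Lt f0) -> fo_term LM * fo_form LM) -> fo_term LM * fo_form LM with
     | None => fun b => (tvar (pvar (code p) 1), fAnd (b ord0).2 (cond (b ord0).1 (code p)))
     | Some g => fun b => (@tapp LM (inl g) (fun i => (b i).1), bigAnd (fun i => (b i).2))
     end) b
  end.

Definition maxAll k (F : 'I_k -> nat) : nat := foldr (fun i acc => maxn (F i) acc) 0 (enum 'I_k).
Lemma le_maxAll k (F : 'I_k -> nat) i : F i <= maxAll F.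
Proof.
rewrite /maxAll; have : i \in enum 'I_k by rewrite mem_enum.
elim: (enum 'I_k) => [|j l IH] //=; rewrite inE => /orP [/eqP ->|/IH H]; first exact: leq_maxl.
exact: leq_trans H (leq_maxr _ _).
Qed.

Fixpoint mct (p : seq nat) (t : fo_term Lt) {struct t} : nat :=
  match t with
  | tvar _ => 0
  | @tapp _ f a =>
    let b := fun i : 'I_(@far Lt f) => mct (nat_of_ord i :: p) (a i) in
    (match f as f0 return ('I_(@far Lt f0) -> nat) -> nat with
     | None => fun b => maxn (code p) (b ord0)
     | Some g => fun b => maxAll b
     end) b
  end.

Fixpoint trf (p : seq nat) (phi : fo_form Lt) {struct phi} : fo_form LM * fo_form LM :=
  match phi with
  | fFalse => (fFalse, fTrue)
  | fTrue => (fTrue, fTrue)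
  | fEq t1 t2 => (fEq (trt (0 :: p) t1).1 (trt (1 :: p) t2).1, fAnd (trt (0 :: p) t1).2 (trt (1 :: p) t2).2)
  | @fRel _ r a => (@fRel LM r (fun i => (trt (nat_of_ord i :: p) (a i)).1),
                    bigAnd (fun i => (trt (nat_of_ord i :: p) (a i)).2))
  | fNot q => (fNot (trf (0 :: p) q).1, (trf (0 :: p) q).2)
  | fAnd q1 q2 => (fAnd (trf (0 :: p) q1).1 (trf (1 :: p) q2).1, fAnd (trf (0 :: p) q1).2 (trf (1 :: p) q2).2)
  | fOr q1 q2 => (fOr (trf (0 :: p) q1).1 (trf (1 :: p) q2).1, fAnd (trf (0 :: p) q1).2 (trf (1 :: p) q2).2)
  | fImp q1 q2 => (fImp (trf (0 :: p) q1).1 (trf (1 :: p) q2).1, fAnd (trf (0 :: p) q1).2 (trf (1 :: p) q2).2)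
  | fEx _ _ | fAll _ _ => (fFalse, fTrue)
  end.

Fixpoint mcf (p : seq nat) (phi : fo_form Lt) {struct phi} : nat :=
  match phi with
  | fEq t1 t2 => maxn (mct (0 :: p) t1) (mct (1 :: p) t2)
  | @fRel _ r a => maxAll (fun i : 'I_(rar r) => mct (nat_of_ord i :: p) (a i))
  | fNot q => mcf (0 :: p) q
  | fAnd q1 q2 | fOr q1 q2 | fImp q1 q2 => maxn (mcf (0 :: p) q1) (mcf (1 :: p) q2)
  | _ => 0
  end.

Definition okvar (B : nat) (w : nat) : Prop :=
  (exists u, u \in vs /\ w = yvar u) \/ (exists c i, c <= B /\ w = pvar c i).

Lemma okvar_mono B B' w : B <= B' -> okvar B w -> okvar B' w.
Proof. move=> HB [H|[c [i [Hc E]]]]; [by left| right; exists c, i; split => //; exact: leq_trans Hc HB]. Qed.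

Lemma tfree_cst w a : ~ tfree w (cst a).
Proof. by move=> [[i Hi]]. Qed.

Lemma tfree_trt p t w : tfree w (trt p t).1 ->
  (exists u, u \in vs /\ w = yvar u) \/ (exists c, c <= mct p t /\ w = pvar c 1).
Proof.
elim: t p => [v|f a IH] p /=.
  case: ifP => Hv /=; first by move=> <-; left; exists v.
  by move/tfree_cst.
case: f a IH => [g|] a IH /=.
  move=> [i /IH [H|[c [Hc E]]]]; first by left.
  right; exists c; split => //; apply: (leq_trans Hc).
  exact: (le_maxAll (fun i : 'I_(far g) => mct (nat_of_ord i :: p) (a i)) i).
move=> <-; right; exists (code p); split => //; exact: leq_maxl.
Qed.

Hypothesis Hzy : forall u, z <> yvar u.
Hypothesis Hzp : forall c, z <> pvar c 1.
Hypothesis Hzb : maxb vsset < z.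

Lemma nf_trt p t : ~ tfree z (trt p t).1.
Proof. by move/tfree_trt => [[u [_ /Hzy]]|[c [_ /Hzp]]]. Qed.

Lemma ffree_cond B s c w : c <= B -> (forall w, tfree w s -> okvar B w) -> ~ tfree z s -> ffree w (cond s c) -> okvar B w.
Proof.
move=> HcB Hs Hzs /= H.
case: H => [[H|H]|[[Hw H]|H]].
- exact: Hs.
- by right; exists c, 0.
- case: H => [[H|H]|H].
  + by exfalso; apply: Hw.
  + exact: Hs.
  + move/ffree_lift/ffree_rw: H => [E|//]; by exfalso; apply: Hw.
- case: H => [H|H]; first by right; exists c, 1; rewrite H.
  by move/tfree_cst: H.
Qed.

Lemma ffree_trt2 p t w : ffree w (trt p t).2 -> okvar (mct p t) w.
Proof.
elim: t p => [v|f a IH] p //=.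
case: f a IH => [g|] a IH /=.
  move/ffree_bigAnd => [i /IH H]; apply: (okvar_mono _ H).
  exact: (le_maxAll (fun i : 'I_(far g) => mct (nat_of_ord i :: p) (a i)) i).
move=> [/IH H|H]; first by apply: (okvar_mono _ H); exact: leq_maxr.
have {}H : ffree w (cond (trt (0 :: p) (a ord0)).1 (code p)) := H.
apply: (ffree_cond _ _ _ H); first exact: leq_maxl.
- move=> w' /tfree_trt [H'|[c [Hc ->]]]; first by left.
  right; exists c, 1; split => //; apply: leq_trans Hc _; exact: leq_maxr.
- exact: nf_trt.
Qed.

Lemma tfree_trt' p t w : tfree w (trt p t).1 -> okvar (mct p t) w.
Proof. by move/tfree_trt => [H|[c [Hc ->]]]; [left| right; exists c, 1]. Qed.

Lemma ffree_trf p phi w : ffree w (trf p phi).1 \/ ffree w (trf p phi).2 -> okvar (mcf p phi) w.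
Proof.
elim: phi p => [| |t1 t2|r a|q IH|q1 IH1 q2 IH2|q1 IH1 q2 IH2|q1 IH1 q2 IH2|m q IH|m q IH] p /=;
  try by move=> [].
- move=> [[/tfree_trt' H|/tfree_trt' H]|[/ffree_trt2 H|/ffree_trt2 H]]; apply: (okvar_mono _ H);
    by [exact: leq_maxl|exact: leq_maxr].
- move=> [[i /tfree_trt' H]|/ffree_bigAnd [i /ffree_trt2 H]]; apply: (okvar_mono _ H);
    exact: (le_maxAll (fun i : 'I_(rar r) => mct (nat_of_ord i :: p) (a i)) i).
- by move=> [H|H]; apply: IH; [left|right].
- move=> [[H|H]|[H|H]]; [apply: (okvar_mono _ (IH1 _ (or_introl H))); exact: leq_maxl
                       |apply: (okvar_mono _ (IH2 _ (or_introl H))); exact: leq_maxr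
                       |apply: (okvar_mono _ (IH1 _ (or_intror H))); exact: leq_maxl
                       |apply: (okvar_mono _ (IH2 _ (or_intror H))); exact: leq_maxr].
- move=> [[H|H]|[H|H]]; [apply: (okvar_mono _ (IH1 _ (or_introl H))); exact: leq_maxl
                       |apply: (okvar_mono _ (IH2 _ (or_introl H))); exact: leq_maxr
                       |apply: (okvar_mono _ (IH1 _ (or_intror H))); exact: leq_maxl
                       |apply: (okvar_mono _ (IH2 _ (or_intror H))); exact: leq_maxr].
- move=> [[H|H]|[H|H]]; [apply: (okvar_mono _ (IH1 _ (or_introl H))); exact: leq_maxl
                       |apply: (okvar_mono _ (IH2 _ (or_introl H))); exact: leq_maxr
                       |apply: (okvar_mono _ (IH1 _ (or_intror H))); exact: leq_maxl
                       |apply: (okvar_mono _ (IH2 _ (or_intror H))); exact: leq_maxr].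
Qed.

Section Sound.
Variable th : M -> M.
Hypothesis HthV : forall x, ~ sat (env1 x) vsset -> th x = c0.
Notation Mc := (@expand_consts L M M (fun x => x)).
Notation Mt := (expand_theta th).
Definition epsM (r : nat -> M) : nat -> M := fun v => if v \in vs then r (yvar v) else e v.

Lemma sound_t p t (r : nat -> M) :
  (forall c, c <= mct p t -> r (pvar c 1) = th (r (pvar c 0))) ->
  sat (M := Mc) r (trt p t).2 -> teval (M := Mc) r (trt p t).1 = teval (M := Mt) (epsM r) t.
Proof.
elim: t p => [v|f a IH] p Hr.
  by move=> _ /=; rewrite /epsM; case: ifP.
case: f a IH Hr => [g|] a IH Hr.
  move/sat_bigAnd => Hc /=; congr fint; apply: functional_extensionality => i.
  apply: IH (Hc i) => c Hc'; apply: Hr; apply: leq_trans Hc' _.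
  exact: (le_maxAll (fun i : 'I_(far g) => mct (nat_of_ord i :: p) (a i)) i).
move=> [Hc Hcond].
have Hr0 : forall c, c <= mct (0 :: p) (a ord0) -> r (pvar c 1) = th (r (pvar c 0)).
  move=> c Hc'; apply: Hr; apply: leq_trans Hc' _; exact: leq_maxr.
have IH0 := IH ord0 (0 :: p) Hr0 Hc.
have Hp := Hr (code p) (leq_maxl _ _).
change (r (pvar (code p) 1) = th (teval (M := Mt) (epsM r) (a ord0))).
case: Hcond => [E|[[a' [Ea' Hn]] Ec0]].
  by rewrite Hp; congr th; rewrite -IH0; exact: (esym E).
rewrite -IH0.
move: Ea'; rewrite /= teval_upd_nf; last exact: nf_trt.
rewrite /upd eqxx => Ea'.
rewrite -Ea' HthV //.
move=> Hv; apply: Hn; apply/sat_lift; apply/sat_rw0 => //.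
by rewrite /upd eqxx.
Qed.

Lemma sound_f p phi (r : nat -> M) : qf phi ->
  (forall c, c <= mcf p phi -> r (pvar c 1) = th (r (pvar c 0))) ->
  sat (M := Mc) r (trf p phi).2 -> (sat (M := Mc) r (trf p phi).1 <-> sat (M := Mt) (epsM r) phi).
Proof.
elim: phi p => [| |t1 t2|R a|q IH|q1 IH1 q2 IH2|q1 IH1 q2 IH2|q1 IH1 q2 IH2|m q IH|m q IH] p //= Hq Hr.
- move=> [H1 H2]; rewrite (sound_t _ H1) ?(sound_t _ H2) // => c Hc; apply: Hr; apply: leq_trans Hc _;
    by [exact: leq_maxl| exact: leq_maxr].
- move/sat_bigAnd => Hc.
  have -> // : (fun i => teval (M := Mc) r (trt (nat_of_ord i :: p) (a i)).1) = (fun i => teval (M := Mt) (epsM r) (a i)).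
  apply: functional_extensionality => i; apply: sound_t (Hc i) => c Hc'; apply: Hr; apply: leq_trans Hc' _.
  exact: (le_maxAll (fun i : 'I_(rar R) => mct (nat_of_ord i :: p) (a i)) i).
- by move=> H; rewrite IH.
- case: Hq => Hq1 Hq2 [H1 H2]; rewrite IH1 ?IH2 // => c Hc; apply: Hr; apply: leq_trans Hc _;
    by [exact: leq_maxl| exact: leq_maxr].
- case: Hq => Hq1 Hq2 [H1 H2]; rewrite IH1 ?IH2 // => c Hc; apply: Hr; apply: leq_trans Hc _;
    by [exact: leq_maxl| exact: leq_maxr].
- case: Hq => Hq1 Hq2 [H1 H2]; rewrite IH1 ?IH2 // => c Hc; apply: Hr; apply: leq_trans Hc _;
    by [exact: leq_maxl| exact: leq_maxr].
Qed.
End Sound.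

Section Compl.
Variables (N : struc L) (th' : N -> N) (h : M -> N) (vzN : N).
Hypothesis Hh0 : h c0 = vzN.
Hypothesis Hth0 : th' vzN = vzN.
Hypothesis HthV' : forall x, ~ sat (env1 x) vsset -> th' x = vzN.
Notation Nc := (@expand_consts L M N h).
Notation Nt := (expand_theta th').
Definition epsN (r : nat -> N) : nat -> N := fun v => if v \in vs then r (yvar v) else h (e v).
Definition valth (s : N) : N := if excluded_middle_informative (sat (env1 s) vsset) then s else vzN.

Lemma valth_in s : sat (env1 s) vsset -> valth s = s.
Proof. by rewrite /valth; case: excluded_middle_informative. Qed.
Lemma valth_out s : ~ sat (env1 s) vsset -> valth s = vzN.
Proof. by rewrite /valth; case: excluded_middle_informative. Qed.

Fixpoint valAt_t (eps : nat -> N) (t : fo_term Lt) (l : seq nat) {struct t} : N :=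
  match t with
  | tvar _ => vzN
  | @tapp _ f a =>
     match l with
     | [::] => (match f as f0 return ('I_(@far Lt f0) -> fo_term Lt) -> N with
                | None => fun a => valth (teval (M := Nt) eps (a ord0))
                | Some _ => fun _ => vzN end) a
     | i :: l' => match (insub i : option 'I_(@far Lt f)) with Some j => valAt_t eps (a j) l' | None => vzN end
     end
  end.

Fixpoint valAt_f (eps : nat -> N) (phi : fo_form Lt) (l : seq nat) {struct phi} : N :=
  match l with
  | [::] => vzN
  | i :: l' => match phi with
     | fEq t1 t2 => if i == 0 then valAt_t eps t1 l' else valAt_t eps t2 l'
     | @fRel _ r a => match (insub i : option 'I_(rar r)) with Some j => valAt_t eps (a j) l' | None => vzN end
     | fNot q => valAt_f eps q l'
     | fAnd q1 q2 | fOr q1 q2 | fImp q1 q2 => if i == 0 then valAt_f eps q1 l' else valAt_f eps q2 l'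
     | _ => vzN end
  end.

Lemma child_hyp (X : nat -> N) p i (F G : seq nat -> N) :
  (forall q, X (code (q ++ p)) = F (rev q)) -> (forall l, F (i :: l) = G l) ->
  forall q, X (code (q ++ i :: p)) = G (rev q).
Proof. by move=> H1 H2 q; have := H1 (rcons q i); rewrite rev_rcons cat_rcons H2. Qed.

Lemma compl_t p t (r : nat -> N) (X : nat -> N) :
  (forall c, c <= mct p t -> r (pvar c 0) = X c /\ r (pvar c 1) = th' (X c)) ->
  (forall q, X (code (q ++ p)) = valAt_t (epsN r) t (rev q)) ->
  sat (M := Nc) r (trt p t).2 /\ teval (M := Nc) r (trt p t).1 = teval (M := Nt) (epsN r) t.
Proof.
elim: t p => [v|f a IH] p Hr HX.
  by split => //=; rewrite /epsN; case: ifP.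
case: f a IH Hr HX => [g|] a IH Hr HX.
  have K : forall i : 'I_(far g), sat (M := Nc) r (trt (nat_of_ord i :: p) (a i)).2 /\
      teval (M := Nc) r (trt (nat_of_ord i :: p) (a i)).1 = teval (M := Nt) (epsN r) (a i).
    move=> i; apply: IH.
      move=> c Hc'; apply: Hr; apply: leq_trans Hc' _.
      exact: (le_maxAll (fun i : 'I_(far g) => mct (nat_of_ord i :: p) (a i)) i).
    apply: (child_hyp HX) => l /=; by rewrite valK.
  split; first by apply/sat_bigAnd => i; case: (K i).
  rewrite /=; congr fint; apply: functional_extensionality => i; by case: (K i).
have Hr0 : forall c, c <= mct (0 :: p) (a ord0) -> r (pvar c 0) = X c /\ r (pvar c 1) = th' (X c).
  move=> c Hc'; apply: Hr; apply: leq_trans Hc' _; exact: leq_maxr.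
have Hch : forall q, X (code (q ++ 0 :: p)) = valAt_t (epsN r) (a ord0) (rev q).
  apply: (child_hyp HX) => l /=.
  by have -> : (insub 0 : option 'I_1) = Some ord0 by exact: (valK ord0).
have [IHc IHt] := IH ord0 (0 :: p) Hr0 Hch.
have [Hp0 Hp1] := Hr (code p) (leq_maxl _ _).
have HXp := HX [::]; rewrite /= in HXp.
set s := teval (M := Nt) (epsN r) (a ord0) in IHt HXp.
change (sat (M := Nc) r (fAnd (trt (0 :: p) (a ord0)).2 (cond (trt (0 :: p) (a ord0)).1 (code p))) /\
        r (pvar (code p) 1) = th' s).
case: (classic (sat (M := N) (env1 s) vsset)) => Hv.
  rewrite valth_in // in HXp.
  split; last by rewrite Hp1 HXp.
  split => //; left; by rewrite /= IHt Hp0 HXp.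
rewrite valth_out // in HXp.
split; last by rewrite Hp1 HXp Hth0 HthV'.
split => //; right; split.
  exists s; split.
    by rewrite /= teval_upd_nf ?IHt ?/upd ?eqxx //; exact: nf_trt.
  move/sat_lift/sat_rw0; rewrite /upd eqxx => H; by apply: Hv; apply: H.
by rewrite /= Hp1 HXp Hth0 Hh0.
Qed.

Lemma compl_f p phi (r : nat -> N) (X : nat -> N) : qf phi ->
  (forall c, c <= mcf p phi -> r (pvar c 0) = X c /\ r (pvar c 1) = th' (X c)) ->
  (forall q, X (code (q ++ p)) = valAt_f (epsN r) phi (rev q)) ->
  sat (M := Nc) r (trf p phi).2 /\ (sat (M := Nc) r (trf p phi).1 <-> sat (M := Nt) (epsN r) phi).
Proof.
elim: phi p => [| |t1 t2|R a|q IH|q1 IH1 q2 IH2|q1 IH1 q2 IH2|q1 IH1 q2 IH2|m q IH|m q IH] p //= Hq Hr HX.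
- have [H1 E1] := compl_t (p := 0 :: p) (t := t1) (r := r) (X := X)
    (fun c Hc => Hr c (leq_trans Hc (leq_maxl _ _))) (child_hyp (F := valAt_f (epsN r) (fEq t1 t2)) (i := 0) (G := valAt_t (epsN r) t1) HX (fun l => erefl)).
  have [H2 E2] := compl_t (p := 1 :: p) (t := t2) (r := r) (X := X)
    (fun c Hc => Hr c (leq_trans Hc (leq_maxr _ _))) (child_hyp (F := valAt_f (epsN r) (fEq t1 t2)) (i := 1) (G := valAt_t (epsN r) t2) HX (fun l => erefl)).
  by rewrite E1 E2.
- have K : forall i : 'I_(rar R), sat (M := Nc) r (trt (nat_of_ord i :: p) (a i)).2 /\
      teval (M := Nc) r (trt (nat_of_ord i :: p) (a i)).1 = teval (M := Nt) (epsN r) (a i).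
    move=> i; apply: compl_t.
      move=> c Hc'; apply: Hr; apply: leq_trans Hc' _.
      exact: (le_maxAll (fun i : 'I_(rar R) => mct (nat_of_ord i :: p) (a i)) i).
    apply: (child_hyp (F := valAt_f (epsN r) (fRel a)) HX) => l /=; by rewrite valK.
  split; first by apply/sat_bigAnd => i; case: (K i).
  have -> // : (fun i => teval (M := Nc) r (trt (nat_of_ord i :: p) (a i)).1) = (fun i => teval (M := Nt) (epsN r) (a i)).
  by apply: functional_extensionality => i; case: (K i).
- have [H1 E1] := IH (0 :: p) Hq Hr (child_hyp (F := valAt_f (epsN r) (fNot q)) (i := 0) (G := valAt_f (epsN r) q) HX (fun l => erefl)).
  by split => //; rewrite E1.
- case: Hq => Hq1 Hq2.
  have [H1 E1] := IH1 (0 :: p) Hq1 (fun c Hc => Hr c (leq_trans Hc (leq_maxl _ _))) (child_hyp (F := valAt_f (epsN r) (fAnd q1 q2)) (i := 0) (G := valAt_f (epsN r) q1) HX (fun l => erefl)).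
  have [H2 E2] := IH2 (1 :: p) Hq2 (fun c Hc => Hr c (leq_trans Hc (leq_maxr _ _))) (child_hyp (F := valAt_f (epsN r) (fAnd q1 q2)) (i := 1) (G := valAt_f (epsN r) q2) HX (fun l => erefl)).
  by rewrite E1 E2.
- case: Hq => Hq1 Hq2.
  have [H1 E1] := IH1 (0 :: p) Hq1 (fun c Hc => Hr c (leq_trans Hc (leq_maxl _ _))) (child_hyp (F := valAt_f (epsN r) (fOr q1 q2)) (i := 0) (G := valAt_f (epsN r) q1) HX (fun l => erefl)).
  have [H2 E2] := IH2 (1 :: p) Hq2 (fun c Hc => Hr c (leq_trans Hc (leq_maxr _ _))) (child_hyp (F := valAt_f (epsN r) (fOr q1 q2)) (i := 1) (G := valAt_f (epsN r) q2) HX (fun l => erefl)).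
  by rewrite E1 E2.
- case: Hq => Hq1 Hq2.
  have [H1 E1] := IH1 (0 :: p) Hq1 (fun c Hc => Hr c (leq_trans Hc (leq_maxl _ _))) (child_hyp (F := valAt_f (epsN r) (fImp q1 q2)) (i := 0) (G := valAt_f (epsN r) q1) HX (fun l => erefl)).
  have [H2 E2] := IH2 (1 :: p) Hq2 (fun c Hc => Hr c (leq_trans Hc (leq_maxr _ _))) (child_hyp (F := valAt_f (epsN r) (fImp q1 q2)) (i := 1) (G := valAt_f (epsN r) q2) HX (fun l => erefl)).
  by rewrite E1 E2.
Qed.

Lemma valAt_t_in eps t l (P : N -> Prop) : P vzN -> (forall s, sat (env1 s) vsset -> P s) -> P (valAt_t eps t l).
Proof.
move=> H0 H1; elim: t l => [v|f a IH] [|i l] //=.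
- case: f a IH => [g|] a IH //=; rewrite /valth; case: excluded_middle_informative => //; exact: H1.
- by case: insub.
Qed.
Lemma valAt_f_in eps phi l (P : N -> Prop) : P vzN -> (forall s, sat (env1 s) vsset -> P s) -> P (valAt_f eps phi l).
Proof.
move=> H0 H1; elim: phi l => [| |t1 t2|R a|q IH|q1 IH1 q2 IH2|q1 IH1 q2 IH2|q1 IH1 q2 IH2|m q IH|m q IH] [|i l] //=.
- by case: (i == 0); apply: valAt_t_in.
- by case: insub => // j; apply: valAt_t_in.
- by case: (i == 0).
- by case: (i == 0).
- by case: (i == 0).
Qed.
End Compl.

End Tr.

Section Bwd.
Variables (L : lang) (K : fieldType) (D : vsdef L K).

Lemma vzero_spec (S : struc L) : defines_nontrivial_vs D S -> sat (env1 (vzero D S)) (vs_zero D).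
Proof.
move=> [[z0 [Hz _]] _]; rewrite /vzero.
exact: (epsilon_spec (dom_inh S) (fun z => sat (env1 z) (vs_zero D)) (ex_intro _ z0 Hz)).
Qed.

Lemma th_zero (S : struc L) (t : S -> S) : defines_nontrivial_vs D S -> theta_axioms D t ->
  t (vzero D S) = vzero D S.
Proof.
move=> [_ [H0 [_ [_ [Hadd [_ [Hassoc [Hcomm [Hzero [Hinv _]]]]]]]]]] [Ht1 [Ht2 _]].
have Vw : inV D (t (vzero D S)) := Ht1 _ H0.
have Ew : t (vzero D S) = vadd D (t (vzero D S)) (t (vzero D S)) by rewrite -Ht2 // Hzero.
have [y [Vy Ey]] := Hinv _ Vw.
move: Vw Ew Ey; set w := t (vzero D S) => Vw Ew Ey.
transitivity (vadd D (vzero D S) w); first by rewrite Hzero.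
transitivity (vadd D w (vzero D S)); first exact: Hcomm.
rewrite -{1}Ey Hassoc // -Ew; exact: Ey.
Qed.

Lemma emb_L (M N : struc L) (th : M -> M) (th' : N -> N) (h : M -> N) :
  embedding (M := expand_theta th) (N := expand_theta th') h -> embedding (M := M) (N := N) h.
Proof.
move=> [Hi [Hf Hr]]; split => //; split.
  move=> f a; exact: (Hf (Some f) a).
move=> r a; exact: (Hr r a).
Qed.
End Bwd.

Lemma bwd (L : lang) (K : fieldType) (T : theory L) (D : vsdef L K)
  (C : kconf K) (M : struc L) (th : M -> M) :
  model_complete T ->
  (forall N : struc L, is_model T N -> defines_nontrivial_vs D N) ->
  model_TthC T D C th ->
  (forall (n : nat) (psi : fo_form (lang_consts L M)),
     placeholder_formula n psi ->
     (exists (N : struc L) (th' : N -> N) (h : M -> N),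
        model_TthC T D C th' /\
        embedding (M := expand_theta th) (N := expand_theta th') h /\
        sat_exV_theta D th' h n psi) ->
     sat_exV_theta D th id n psi) ->
  ec_model_TthC T D C th.
Proof.
move=> MC HV HM RH; split => // N th' h HN Hemb phi e Hex Hsat.
have [vs [chi [Ephi Hq]]] := existential_exs Hex; subst phi.
have [HMT [HthM _]] := HM; have [HNT [HthN _]] := HN.
have HVM := HV _ HMT; have HVN := HV _ HNT.
set vsset := vs_set D.
set c0 := vzero D M.
set vzN := vzero D N.
set n := (mcf [::] chi).+1.
set z := pvar (n + (maxb vsset).*2.+1) 0.
have Hzy : forall u, z <> yvar n u.
  move=> u /pvar_inj [E _]; lia.
have Hzp : forall c, z <> pvar c 1 by move=> c /pvar_inj [_ E].
have Hzb : maxb vsset < z.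
  have := Cantor.to_nat_non_decreasing (n + (maxb vsset).*2.+1) 0; rewrite /z /pvar; lia.
have Hh0 : h c0 = vzN.
  have H1 := vzero_spec HVM.
  have H2 : sat (env1 (h c0)) (vs_zero D) by apply/(MC _ _ _ HMT HNT (emb_L Hemb)).
  have [[z1 [_ Hu]] _] := HVN.
  have E1 := Hu _ H2; have E2 := Hu _ (vzero_spec HVN); by rewrite -E1 E2.
have Hth0 : th' vzN = vzN by apply: th_zero.
have HthV' : forall x, ~ sat (env1 x) vsset -> th' x = vzN by case: HthN => _ [_ [_ H]].
have HthV : forall x, ~ sat (env1 x) vsset -> th x = c0 by case: HthM => _ [_ [_ H]].
set psi := exs (map (yvar n) vs) (fAnd (trf n vs e z c0 vsset [::] chi).2 (trf n vs e z c0 vsset [::] chi).1).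
have Hnot : forall c i u, c < n -> pvar c i <> yvar n u.
  move=> c i u Hc /pvar_inj [E _]; lia.
have Hnotin : forall c i, c < n -> pvar c i \notin map (yvar n) vs.
  move=> c i Hc; apply/mapP => -[u _ E]; exact: (Hnot c i u Hc E).
have Hph : placeholder_formula n psi.
  move=> v /ffree_exs [Hv Hf].
  have := ffree_trf Hzy Hzp (p := [::]) (phi := chi) (w := v) (vs := vs) (e := e) (c0 := c0) (vsset := vsset).
  case: Hf => Hf; [move/(_ (or_intror Hf)) | move/(_ (or_introl Hf))];
    move=> [[u [Hu E]]|[c [i [Hc E]]]];
    try (by exfalso; move: Hv; rewrite E (map_f (yvar n) Hu));
    by rewrite E /pvar Cantor.cancel_of_to /=.
have [b Hb] := (proj1 (sat_exs _ _ _)) Hsat.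
set epsN' := fun u => if u \in vs then b u else (h \o e) u in Hb.
set X := fun k => valAt_f vsset th' vzN epsN' chi (rev (dec k)).
have HN' : sat_exV_theta D th' h n psi.
  exists X; split.
    move=> k _; rewrite /X; apply: valAt_f_in => //.
    by case: HVN => _ [].
  apply/sat_exs.
  exists (fun u => b (((Cantor.of_nat u).1 - n)./2)).
  set r := fun u => _.
  have Er : epsN n vs e h r = epsN'.
    apply: functional_extensionality => v; rewrite /epsN /epsN' /r.
    case: ifP => Hv //; rewrite (map_f (yvar n) Hv) /yvar /pvar Cantor.cancel_of_to /=.
    congr b; lia.
  have KK := @compl_f L M n vs e z c0 vsset Hzy Hzp Hzb N th' h vzN Hh0 Hth0 HthV' [::] chi r X Hq.
  have Hr : forall c, c <= mcf [::] chi -> r (pvar c 0) = X c /\ r (pvar c 1) = th' (X c).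
    move=> c Hc; rewrite /r !(negbTE (Hnotin _ _ _)) // /penv /pvar !Cantor.cancel_of_to //.
  have HX : forall q, X (code (q ++ [::])) = valAt_f vsset th' vzN (epsN n vs e h r) chi (rev q).
    by move=> q; rewrite cats0 /X dec_code Er.
  have [H1 H2] := KK Hr HX.
  by split => //; apply/H2; rewrite Er.
have [x' [Hx'V Hx']] := RH n psi Hph (ex_intro _ N (ex_intro _ th' (ex_intro _ h (conj HN (conj Hemb HN'))))).
have [f' Hf'] := (proj1 (sat_exs _ _ _)) Hx'.
pose r := fun u => if u \in map (yvar n) vs then f' u else penv th x' u.
have {Hf'} [Hc Ht] : sat (M := @expand_consts L M M id) r (fAnd (trf n vs e z c0 vsset [::] chi).2 (trf n vs e z c0 vsset [::] chi).1) := Hf'.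
have Hr : forall c, c <= mcf [::] chi -> r (pvar c 1) = th (r (pvar c 0)).
  move=> c Hc'; rewrite /r !(negbTE (Hnotin _ _ _)) // /penv /pvar !Cantor.cancel_of_to //.
have := (proj1 (@sound_f L M n vs e z c0 vsset Hzy Hzp Hzb th HthV [::] chi r Hq Hr Hc)) Ht.
move=> Hs; apply/sat_exs; exists (fun v => r (yvar n v)); exact: Hs.
Qed.

Theorem corollary3p5 (L : lang) (K : fieldType) (T : theory L) (D : vsdef L K)
  (C : kconf K) (M : struc L) (th : M -> M) :
  model_complete T ->
  (forall N : struc L, is_model T N -> defines_nontrivial_vs D N) ->
  kernel_configuration C ->
  model_TthC T D C th ->
  (ec_model_TthC T D C th <->
   forall (n : nat) (psi : fo_form (lang_consts L M)),
     placeholder_formula n psi ->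
     (exists (N : struc L) (th' : N -> N) (h : M -> N),
        model_TthC T D C th' /\
        embedding (M := expand_theta th) (N := expand_theta th') h /\
        sat_exV_theta D th' h n psi) ->
     sat_exV_theta D th id n psi).
Proof.
move=> MC HV HC HM; split.
- move=> EC n psi Hph [N [th' [h [HN [Hemb [x [HxV Hpsi]]]]]]].
  have [U [HU HUF]] := U_exists EC HN Hemb.
  exact: (fwd_main MC HU HUF HxV Hpsi).
- exact: bwd MC HV HM.
Qed.
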